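(* Consider the setting and Algorithm DRDGA described in the context, under Assumptions A1 and A2, with stepsize $\beta[t]=q/t$ for $t=1,2,\dots$, where the constant $q>0$ satisfies $q\gamma/m\ge 4$, $\gamma:=\sum_{j=1}^m\gamma_j$. Let $D$ be a constant with $\sup_t\|\lambda_i[t]\|\le D$ for all $i$ (which exists by Theorem 1), let $B:=\max_{1\le i\le m}\sqrt{p}\,(G_i+\gamma_iD)$, and let $\delta$, $\eta$ be as in the context. Then for all $T\ge 2$, $$F(\widehat{\mathbf{x}}[T])-F(\mathbf{x}^* )\le \frac{32}{T\delta}\sum_{i=1}^m(G_i+\gamma_iD)\left(\frac{\eta}{1-\eta}\sum_{i=1}^m\|\theta_i[0]\|_1+\frac{qmB}{1-\eta}(1+\ln T)\right)+\frac{q}{T}\sum_{i=1}^m(G_i+\gamma_iD)^2,$$ where $\mathbf{x}^*$ is an optimal solution of the problem.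
   Context: Problem: $m$ agents; agent $i$ has a function $f_i:\mathbb{R}^{n_i}\to\mathbb{R}$, a set $\mathbf{X}_i\subseteq\mathbb{R}^{n_i}$, a matrix $A_i\in\mathbb{R}^{p\times n_i}$ and a vector $\mathbf{b}_i\in\mathbb{R}^p$. The problem is $\min_{\mathbf{x}_i\in\mathbf{X}_i,\,i=1,\dots,m} F(\mathbf{x}):=\sum_{i=1}^m f_i(\mathbf{x}_i)$ subject to $\sum_{i=1}^m (A_i\mathbf{x}_i-\mathbf{b}_i)=0$, where $\mathbf{x}=(\mathbf{x}_1,\dots,\mathbf{x}_m)$. Regularization parameters $\gamma_i>0$ are fixed; $\mathcal{L}_i(\mathbf{x}_i,\lambda)=f_i(\mathbf{x}_i)+\lambda^\top(A_i\mathbf{x}_i-\mathbf{b}_i)-\frac{\gamma_i}{2}\lambda^\top\lambda$ for $\lambda\in\mathbb{R}^p$. Assumption A1: each $f_i$ is $\tau_i$-strongly convex ($\tau_i>0$), and each $\mathbf{X}_i$ is nonempty, convex and compact. $G_i>0$ denote constants with $\|A_i\mathbf{x}_i-\mathbf{b}_i\|\le G_i$ for all $\mathbf{x}_i\in\mathbf{X}_i$. Network: a sequence of directed graphs $\mathcal{G}[t]=(\{1,\dots,m\},\mathcal{E}[t])$. Out-neighbors $\mathcal{N}_i^{out}[t]=\{j:(i,j)\in\mathcal{E}[t]\}\cup\{i\}$, in-neighbors $\mathcal{N}_i^{in}[t]=\{j:(j,i)\in\mathcal{E}[t]\}\cup\{i\}$, out-degree $d_i[t]=|\mathcal{N}_i^{out}[t]|$.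 Weight matrix $W[t]$: $(W[t])_{ij}=1/d_j[t]$ if $j\in\mathcal{N}_i^{in}[t]$ and $0$ otherwise (column stochastic). Assumption A2: each agent $i$ knows $d_i[t]$ for every $t$, and there is an integer $B_c>0$ such that for every $k\ge0$ the graph with edge set $\bigcup_{l=kB_c}^{(k+1)B_c-1}\mathcal{E}[l]$ is strongly connected. Constants: $\delta:=\inf_{t\ge0}\min_{1\le i\le m}(W[t]W[t-1]\cdots W[0]\mathbf{1})_i$, which satisfies $\delta\ge 1/m^{mB_c}$; and $\eta:=(1-1/m^{mB_c})^{1/(mB_c)}\in(0,1)$. Algorithm DRDGA: initialize $\theta_i[0]\in\mathbb{R}^p$ and $\rho_i[0]=1$. For $t=0,1,\dots$ and each $i$: $\mathbf{u}_i[t+1]=\sum_j (W[t])_{ij}\theta_j[t]$; $\rho_i[t+1]=\sum_j (W[t])_{ij}\rho_j[t]$; $\lambda_i[t+1]=\mathbf{u}_i[t+1]/\rho_i[t+1]$; $\mathbf{x}_i[t+1]=\arg\min_{\mathbf{x}_i\in\mathbf{X}_i}\mathcal{L}_i(\mathbf{x}_i,\lambda_i[t+1])$; $\theta_i[t+1]=\mathbf{u}_i[t+1]+\beta[t+1](A_i\mathbf{x}_i[t+1]-\mathbf{b}_i-\gamma_i\lambda_i[t+1])$. Averaged primal iterates: for $T\ge2$, $\widehat{\mathbf{x}}_i[T]=\frac{\sum_{t=1}^T (t-1)\mathbf{x}_i[t]}{T(T-1)/2}$, and $\widehat{\mathbf{x}}[T]=(\widehat{\mathbf{x}}_1[T],\dots,\widehat{\mathbf{x}}_m[T])$.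 $\|\cdot\|_1$ is the $\ell_1$ norm. *)

(* Defs.v *)
From Stdlib Require Import Reals Lra Relations.
Open Scope R_scope.

(* Vectors of R^n are represented as functions nat -> R; only the first n
   coordinates are meaningful. *)
Definition vec := nat -> R.

Fixpoint rsum (n : nat) (f : nat -> R) : R :=
  match n with O => 0 | S k => rsum k f + f k end.

Fixpoint rmax_upto (n : nat) (f : nat -> R) : R :=
  match n with O => f O | S k => Rmax (rmax_upto k f) (f (S k)) end.

Fixpoint countb (n : nat) (P : nat -> bool) : nat :=
  match n with O => O | S k => (countb k P + (if P k then 1 else 0))%nat end.

Definition norm2 (n : nat) (v : vec) : R := sqrt (rsum n (fun k => v k ^ 2)).
Definition norm1 (n : nat) (v : vec) : R := rsum n (fun k => Rabs (v k)).

Definition vsub (u v : vec) : vec := fun k => u k - v k.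
Definition vcomb (a : R) (u v : vec) : vec := fun k => a * u k + (1 - a) * v k.

Definition supported (n : nat) (x : vec) : Prop := forall k, (n <= k)%nat -> x k = 0.

Definition matvec (n : nat) (A : nat -> nat -> R) (x : vec) : vec :=
  fun k => rsum n (fun l => A k l * x l).

Definition strongly_convex (n : nat) (f : vec -> R) (tau : R) : Prop :=
  forall x y a, supported n x -> supported n y -> 0 <= a <= 1 ->
    f (vcomb a x y) <= a * f x + (1 - a) * f y
                       - tau / 2 * a * (1 - a) * (norm2 n (vsub x y)) ^ 2.

Definition subset_Rn (n : nat) (X : vec -> Prop) : Prop :=
  forall x, X x -> supported n x.
Definition nonempty (X : vec -> Prop) : Prop := exists x, X x.
Definition convex_set (X : vec -> Prop) : Prop :=
  forall x y a, X x -> X y -> 0 <= a <= 1 -> X (vcomb a x y).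
Definition closed_set (X : vec -> Prop) : Prop :=
  forall (s : nat -> vec) (y : vec), (forall j, X (s j)) ->
    (forall k, Un_cv (fun j => s j k) (y k)) -> X y.
Definition bounded_set (n : nat) (X : vec -> Prop) : Prop :=
  exists M, forall x, X x -> norm2 n x <= M.
Definition compact_set (n : nat) (X : vec -> Prop) : Prop :=
  closed_set X /\ bounded_set n X.

Definition lagr (p n : nat) (f : vec -> R) (A : nat -> nat -> R) (b : vec)
  (gam : R) (x lam : vec) : R :=
  f x + rsum p (fun k => lam k * (matvec n A x k - b k))
      - gam / 2 * rsum p (fun k => lam k ^ 2).

(* ---- Network ---- E t i j = true iff (i,j) is in E[t] *)
Definition in_out (E : nat -> nat -> nat -> bool) (t i j : nat) : bool :=
  (Nat.eqb j i || E t i j)%bool.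

Definition outdeg (m : nat) (E : nat -> nat -> nat -> bool) (t i : nat) : R :=
  INR (countb m (in_out E t i)).

Definition Wt (m : nat) (E : nat -> nat -> nat -> bool) (t i j : nat) : R :=
  if (Nat.eqb j i || E t j i)%bool then / outdeg m E t j else 0.

Fixpoint Wprod (m : nat) (E : nat -> nat -> nat -> bool) (t i : nat) : R :=
  match t with
  | O => rsum m (fun j => Wt m E O i j)
  | S s => rsum m (fun j => Wt m E (S s) i j * Wprod m E s j)
  end.

Definition union_edge (m Bc : nat) (E : nat -> nat -> nat -> bool) (k : nat)
  (i j : nat) : Prop :=
  (i < m)%nat /\ (j < m)%nat /\
  exists l, (k * Bc <= l < (k + 1) * Bc)%nat /\ E l i j = true.

Definition strongly_connected_union (m Bc : nat) (E : nat -> nat -> nat -> bool)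
  (k : nat) : Prop :=
  forall i j, (i < m)%nat -> (j < m)%nat ->
    clos_refl_trans nat (union_edge m Bc E k) i j.

(* Assumption A2 (the informational part "agent i knows d_i[t]" is not
   mathematical content) *)
Definition assumption_A2 (m Bc : nat) (E : nat -> nat -> nat -> bool) : Prop :=
  (0 < Bc)%nat /\ forall k, strongly_connected_union m Bc E k.

Definition is_inf (P : R -> Prop) (d : R) : Prop :=
  (forall x, P x -> d <= x) /\ (forall l, (forall x, P x -> l <= x) -> l <= d).

Definition is_delta (m : nat) (E : nat -> nat -> nat -> bool) (d : R) : Prop :=
  is_inf (fun v => exists t i, (i < m)%nat /\ v = Wprod m E t i) d.

(* real k-th root of x >= 0 (with 0^(1/k) = 0) *)
Definition rroot (x : R) (k : nat) : R :=
  if Rlt_dec 0 x then Rpower x (/ INR k) else 0.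

Definition eta (m Bc : nat) : R :=
  rroot (1 - / (INR m ^ (m * Bc))) (m * Bc).

Definition DRDGA_run (m p : nat) (n : nat -> nat) (f : nat -> vec -> R)
  (X : nat -> vec -> Prop) (A : nat -> nat -> nat -> R) (b : nat -> vec)
  (gam : nat -> R) (E : nat -> nat -> nat -> bool) (beta : nat -> R)
  (theta u lam : nat -> nat -> vec) (rho : nat -> nat -> R)
  (x : nat -> nat -> vec) : Prop :=
  forall i, (i < m)%nat ->
    rho i O = 1 /\
    forall t,
      (forall k, u i (S t) k = rsum m (fun j => Wt m E t i j * theta j t k)) /\
      rho i (S t) = rsum m (fun j => Wt m E t i j * rho j t) /\
      (forall k, lam i (S t) k = u i (S t) k / rho i (S t)) /\
      (X i (x i (S t)) /\
       forall z, X i z ->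
         lagr p (n i) (f i) (A i) (b i) (gam i) (x i (S t)) (lam i (S t))
         <= lagr p (n i) (f i) (A i) (b i) (gam i) z (lam i (S t))) /\
      (forall k, theta i (S t) k =
         u i (S t) k + beta (S t) *
           (matvec (n i) (A i) (x i (S t)) k - b i k - gam i * lam i (S t) k)).

Definition Fobj (m : nat) (f : nat -> vec -> R) (x : nat -> vec) : R :=
  rsum m (fun i => f i (x i)).

Definition is_optimal (m p : nat) (n : nat -> nat) (f : nat -> vec -> R)
  (X : nat -> vec -> Prop) (A : nat -> nat -> nat -> R) (b : nat -> vec)
  (xs : nat -> vec) : Prop :=
  let feasible (y : nat -> vec) :=
    (forall i, (i < m)%nat -> X i (y i)) /\
    (forall k, (k < p)%nat ->
       rsum m (fun i => matvec (n i) (A i) (y i) k - b i k) = 0) in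
  feasible xs /\ forall y, feasible y -> Fobj m f xs <= Fobj m f y.

(* xhat_i[T] = sum_{t=1}^T (t-1) x_i[t] / (T(T-1)/2) *)
Definition xhat (x : nat -> nat -> vec) (T : nat) : nat -> vec :=
  fun i k => rsum T (fun s => INR s * x i (S s) k) / (INR T * (INR T - 1) / 2).

(* Main.v *)
Require Import Defs.
From Stdlib Require Import Reals Lra Lia Relations FunctionalExtensionality.
Open Scope R_scope.

Lemma rsum_ext n f g : (forall k, (k < n)%nat -> f k = g k) -> rsum n f = rsum n g.
Proof. induction n; simpl; intros H; auto. rewrite IHn by (intros; apply H; lia). rewrite H by lia; auto. Qed.

Lemma rsum_le n f g : (forall k, (k < n)%nat -> f k <= g k) -> rsum n f <= rsum n g.
Proof. induction n; simpl; intros H; [lra|]. assert (f n <= g n) by (apply H; lia).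
 assert (rsum n f <= rsum n g) by (apply IHn; intros; apply H; lia). lra. Qed.

Lemma rsum_nonneg n f : (forall k, (k < n)%nat -> 0 <= f k) -> 0 <= rsum n f.
Proof. intros H. replace 0 with (rsum n (fun _ => 0)). apply rsum_le; auto.
 induction n; simpl; auto. rewrite IHn; [lra|]. intros; apply H; lia. Qed.

Lemma rsum_zero n : rsum n (fun _ => 0) = 0.
Proof. induction n; simpl; auto. rewrite IHn; lra. Qed.

Lemma rsum_plus n f g : rsum n (fun k => f k + g k) = rsum n f + rsum n g.
Proof. induction n; simpl; [lra|]. rewrite IHn; lra. Qed.

Lemma rsum_minus n f g : rsum n (fun k => f k - g k) = rsum n f - rsum n g.
Proof. induction n; simpl; [lra|]. rewrite IHn; lra. Qed.

Lemma rsum_scal n c f : rsum n (fun k => c * f k) = c * rsum n f.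
Proof. induction n; simpl; [lra|]. rewrite IHn; lra. Qed.

Lemma rsum_scal_r n c f : rsum n (fun k => f k * c) = rsum n f * c.
Proof. induction n; simpl; [lra|]. rewrite IHn; lra. Qed.

Lemma rsum_const n c : rsum n (fun _ => c) = INR n * c.
Proof. induction n. simpl; lra. rewrite S_INR. simpl rsum. rewrite IHn. lra. Qed.

Lemma rsum_swap n m (f : nat -> nat -> R) :
  rsum n (fun i => rsum m (fun j => f i j)) = rsum m (fun j => rsum n (fun i => f i j)).
Proof. induction n; simpl. rewrite rsum_zero; auto. rewrite IHn, <- rsum_plus; auto. Qed.

Lemma rsum_abs n f : Rabs (rsum n f) <= rsum n (fun k => Rabs (f k)).
Proof. induction n; simpl. rewrite Rabs_R0; lra.
 eapply Rle_trans; [apply Rabs_triang|]. lra. Qed.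

Lemma rsum_ge_term n f k : (forall j, (j < n)%nat -> 0 <= f j) -> (k < n)%nat -> f k <= rsum n f.
Proof. induction n; intros H Hk; [lia|]. simpl.
 destruct (Nat.eq_dec k n). subst. assert (0 <= rsum n f) by (apply rsum_nonneg; intros; apply H; lia). lra.
 assert (f k <= rsum n f) by (apply IHn; [intros; apply H|]; lia). assert (0 <= f n) by (apply H; lia). lra. Qed.

Definition ev (k : nat) : nat -> R := fun j => if Nat.eqb j k then 1 else 0.

Lemma rsum_ev n f k : (k < n)%nat -> rsum n (fun j => f j * ev k j) = f k.
Proof. induction n; intros Hk; [lia|]. simpl. destruct (Nat.eq_dec k n).
 - subst. rewrite (rsum_ext n _ (fun _ => 0)). rewrite rsum_zero. unfold ev; rewrite Nat.eqb_refl; lra.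
   intros j Hj; unfold ev; destruct (Nat.eqb_spec j n); [lia|lra].
 - rewrite IHn by lia. unfold ev; destruct (Nat.eqb_spec n k); [lia|lra].
Qed.

Lemma rsum_ev_l n f k : (k < n)%nat -> rsum n (fun j => ev k j * f j) = f k.
Proof. intros. rewrite <- (rsum_ev n f k) by auto. apply rsum_ext; intros; lra. Qed.

Lemma rsum_shift n f : rsum (S n) f = f O + rsum n (fun k => f (S k)).
Proof. induction n; simpl in *. lra. rewrite IHn. lra. Qed.

Lemma rsum_rev n f : rsum n f = rsum n (fun k => f (n - 1 - k)%nat).
Proof. induction n. auto. transitivity (rsum n f + f n); [reflexivity|]. rewrite rsum_shift. rewrite IHn.
 replace (S n - 1 - 0)%nat with n by lia. rewrite Rplus_comm. f_equal. apply rsum_ext; intros; f_equal; lia. Qed.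

Lemma rsum_if_count n (P : nat -> bool) c : rsum n (fun k => if P k then c else 0) = INR (countb n P) * c.
Proof. induction n; simpl. lra. rewrite IHn, plus_INR. destruct (P n); simpl; lra. Qed.

Lemma countb_le n P : (countb n P <= n)%nat.
Proof. induction n; simpl; auto. destruct (P n); lia. Qed.

Lemma countb_true n P k : (k < n)%nat -> P k = true -> (1 <= countb n P)%nat.
Proof. induction n; intros Hk HP; [lia|]. simpl. destruct (Nat.eq_dec k n). subst; rewrite HP; lia.
 specialize (IHn ltac:(lia) HP). lia. Qed.

Lemma countb_mono n (P Q : nat -> bool) : (forall k, (k < n)%nat -> P k = true -> Q k = true) -> (countb n P <= countb n Q)%nat.
Proof. induction n; intros H; simpl; auto. assert (countb n P <= countb n Q)%nat by (apply IHn; intros; apply H; auto; lia).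
 destruct (P n) eqn:E1. rewrite H by (auto; lia). lia. destruct (Q n); lia. Qed.

Lemma countb_strict n (P Q : nat -> bool) : (forall k, (k < n)%nat -> P k = true -> Q k = true) ->
  forall j, (j < n)%nat -> P j = false -> Q j = true -> (countb n P < countb n Q)%nat.
Proof. induction n; intros H j Hj HP HQ; [lia|]. simpl. destruct (Nat.eq_dec j n). subst.
 rewrite HP, HQ. assert (countb n P <= countb n Q)%nat by (apply countb_mono; intros; apply H; auto; lia). lia.
 assert (countb n P < countb n Q)%nat by (apply (IHn ltac:(intros; apply H; auto; lia) j); auto; lia).
 destruct (P n) eqn:E1. rewrite H by (auto; lia). lia. destruct (Q n); lia. Qed.

Lemma countb_lt_ex n P : (countb n P < n)%nat -> exists j, (j < n)%nat /\ P j = false.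
Proof. induction n; intros H; simpl in H; [lia|]. destruct (P n) eqn:E1.
 destruct IHn as [j [Hj Hp]]; [lia|]. exists j; split; auto; lia. exists n; split; auto. Qed.

Lemma countb_ge1_ex n P : (1 <= countb n P)%nat -> exists j, (j < n)%nat /\ P j = true.
Proof. induction n; intros H; simpl in H; [lia|]. destruct (P n) eqn:E1. exists n; split; auto.
 destruct IHn as [j [Hj Hp]]; [lia|]. exists j; split; auto; lia. Qed.

Lemma countb_full n P : (n <= countb n P)%nat -> forall j, (j < n)%nat -> P j = true.
Proof. intros H j Hj. destruct (P j) eqn:E1; auto. exfalso.
 assert (countb n P < countb n (fun _ => true))%nat.
 apply (countb_strict n P (fun _ => true)) with j; auto.
 assert (countb n (fun _ => true) <= n)%nat by apply countb_le. lia. Qed.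

Lemma rmax_upto_ge n f k : (k <= n)%nat -> f k <= rmax_upto n f.
Proof. induction n; intros Hk; simpl. replace k with O by lia; lra.
 destruct (Nat.eq_dec k (S n)). subst. apply Rmax_r. eapply Rle_trans; [apply IHn; lia| apply Rmax_l]. Qed.

Lemma sq_sum_zero n a : rsum n (fun k => a k ^ 2) = 0 -> forall k, (k < n)%nat -> a k = 0.
Proof. intros H k Hk. assert (a k ^ 2 <= rsum n (fun k => a k ^ 2)).
 apply (rsum_ge_term n (fun k => a k ^ 2)); auto; intros; apply pow2_ge_0. rewrite H in H0.
 assert (0 <= a k ^ 2) by apply pow2_ge_0. assert (a k ^ 2 = 0) by lra. simpl in H2. nra. Qed.

Lemma cauchy_schwarz n a c : rsum n (fun k => a k * c k) <=
  sqrt (rsum n (fun k => a k ^ 2)) * sqrt (rsum n (fun k => c k ^ 2)).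
Proof.
 set (SA := rsum n (fun k => a k ^ 2)). set (SC := rsum n (fun k => c k ^ 2)).
 assert (HA : 0 <= SA) by (apply rsum_nonneg; intros; apply pow2_ge_0).
 assert (HC : 0 <= SC) by (apply rsum_nonneg; intros; apply pow2_ge_0).
 destruct (Req_dec SA 0) as [E0|NA].
 { rewrite (rsum_ext _ _ (fun _ => 0)). rewrite rsum_zero. apply Rmult_le_pos; apply sqrt_pos.
   intros k Hk. rewrite (sq_sum_zero n a E0 k Hk). lra. }
 destruct (Req_dec SC 0) as [E1|NC].
 { rewrite (rsum_ext _ _ (fun _ => 0)). rewrite rsum_zero. apply Rmult_le_pos; apply sqrt_pos.
   intros k Hk. rewrite (sq_sum_zero n c E1 k Hk). lra. }
 set (na := sqrt SA). set (nc := sqrt SC).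
 assert (Pa : 0 < na) by (apply sqrt_lt_R0; lra). assert (Pc : 0 < nc) by (apply sqrt_lt_R0; lra).
 assert (Ha2 : na * na = SA) by (apply sqrt_sqrt; lra). assert (Hc2 : nc * nc = SC) by (apply sqrt_sqrt; lra).
 assert (0 <= rsum n (fun k => (a k / na - c k / nc) ^ 2)) by (apply rsum_nonneg; intros; apply pow2_ge_0).
 assert (rsum n (fun k => (a k / na - c k / nc) ^ 2) =
   SA / (na*na) + SC / (nc*nc) - 2 / (na * nc) * rsum n (fun k => a k * c k)).
 { unfold SA, SC. rewrite <- !rsum_scal. unfold Rdiv. rewrite <- (rsum_scal_r n (/ (na*na))), <- (rsum_scal_r n (/ (nc*nc))).
   rewrite <- rsum_plus, <- rsum_minus. apply rsum_ext; intros. field. split; lra. }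
 rewrite H0, Ha2, Hc2 in H. unfold Rdiv in H. rewrite !Rinv_r in H by lra.
 assert (2 / (na * nc) * rsum n (fun k => a k * c k) <= 2) by lra.
 assert (0 < na * nc) by (apply Rmult_lt_0_compat; auto).
 apply Rmult_le_compat_l with (r := na*nc/2) in H1; [|lra].
 replace (na * nc / 2 * (2 / (na * nc) * rsum n (fun k => a k * c k))) with (rsum n (fun k => a k * c k)) in H1 by (field; lra).
 lra.
Qed.

Section Net.
Variable m : nat.
Variable E : nat -> nat -> nat -> bool.
Hypothesis Hm : (1 <= m)%nat.

Lemma outdeg_pos t j : (j < m)%nat -> 1 <= outdeg m E t j.
Proof. intros. unfold outdeg. replace 1 with (INR 1) by auto. apply le_INR.
 apply (countb_true _ _ j); auto. unfold in_out. rewrite Nat.eqb_refl; auto. Qed.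

Lemma outdeg_le t j : outdeg m E t j <= INR m.
Proof. unfold outdeg. apply le_INR, countb_le. Qed.

Lemma Wt_nonneg t i j : (j < m)%nat -> 0 <= Wt m E t i j.
Proof. intros. unfold Wt. destruct (_ || _)%bool; [|lra]. assert (1 <= outdeg m E t j) by (apply outdeg_pos; auto).
 apply Rlt_le, Rinv_0_lt_compat; lra. Qed.

Lemma Wt_pos_ge t i j : (j < m)%nat -> (Nat.eqb j i || E t j i)%bool = true -> / INR m <= Wt m E t i j.
Proof. intros Hj H. unfold Wt. rewrite H. assert (1 <= outdeg m E t j) by (apply outdeg_pos; auto).
 apply Rinv_le_contravar; [lra| apply outdeg_le]. Qed.

Lemma Wt_colsum t j : (j < m)%nat -> rsum m (fun i => Wt m E t i j) = 1.
Proof. intros Hj. unfold Wt. rewrite (rsum_ext _ _ (fun i => if in_out E t j i then / outdeg m E t j else 0)).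
 rewrite rsum_if_count. unfold outdeg at 1. field. assert (1 <= outdeg m E t j) by (apply outdeg_pos; auto).
 unfold outdeg in H. lra.
 intros k Hk. unfold in_out. rewrite Nat.eqb_sym. auto. Qed.

Definition step (t : nat) (r : nat -> R) : nat -> R :=
  fun j => rsum m (fun l => r l * Wt m E t l j).

Fixpoint itL (t d : nat) (r : nat -> R) : nat -> R :=
  match d with O => r | S d' => step (t - d') (itL t d' r) end.

Lemma itL_nonneg t d r : (forall k, (k < m)%nat -> 0 <= r k) -> forall j, (j < m)%nat -> 0 <= itL t d r j.
Proof. intros H. induction d; intros j Hj; simpl; auto. unfold step. apply rsum_nonneg. intros.
 apply Rmult_le_pos; auto. apply Wt_nonneg; auto. Qed.

Lemma itL_comp t d1 d2 r : itL t (d1 + d2) r = itL (t - d1) d2 (itL t d1 r).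
Proof. induction d2. rewrite Nat.add_0_r; auto. rewrite <- plus_n_Sm. simpl. rewrite IHd2.
 replace (t - (d1 + d2))%nat with (t - d1 - d2)%nat by lia. auto. Qed.

Lemma rsum_ev_sym f j : (j < m)%nat -> rsum m (fun k => f k * ev k j) = f j.
Proof. intros. rewrite <- (rsum_ev m f j) by auto. apply rsum_ext. intros; unfold ev; rewrite Nat.eqb_sym; auto. Qed.

Lemma itL_lin t d r j : (j < m)%nat -> itL t d r j = rsum m (fun k => r k * itL t d (ev k) j).
Proof. revert j. induction d; intros j Hj; simpl. rewrite rsum_ev_sym; auto.
 unfold step. rewrite (rsum_ext _ _ (fun l => rsum m (fun k => r k * itL t d (ev k) l * Wt m E (t - d) l j))).
 rewrite rsum_swap. apply rsum_ext. intros k Hk. rewrite <- rsum_scal. apply rsum_ext; intros; lra.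
 intros l Hl. rewrite IHd by auto. rewrite <- rsum_scal_r. auto. Qed.

Lemma step_bounds t r a c : (forall k, (k < m)%nat -> a <= r k <= c) -> forall j, (j < m)%nat -> a <= step t r j <= c.
Proof. intros H j Hj. unfold step. pose proof (Wt_colsum t j Hj).
 assert (rsum m (fun l => r l * Wt m E t l j) - a = rsum m (fun l => (r l - a) * Wt m E t l j)).
 { rewrite (rsum_ext _ (fun l => (r l - a) * Wt m E t l j) (fun l => r l * Wt m E t l j - a * Wt m E t l j)).
   rewrite rsum_minus, rsum_scal, H0. lra. intros; lra. }
 assert (c - rsum m (fun l => r l * Wt m E t l j) = rsum m (fun l => (c - r l) * Wt m E t l j)).
 { rewrite (rsum_ext _ (fun l => (c - r l) * Wt m E t l j) (fun l => c * Wt m E t l j - r l * Wt m E t l j)).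
   rewrite rsum_minus, rsum_scal, H0. lra. intros; lra. }
 assert (0 <= rsum m (fun l => (r l - a) * Wt m E t l j)).
 { apply rsum_nonneg; intros. apply Rmult_le_pos; [specialize (H k H3); lra| apply Wt_nonneg; auto]. }
 assert (0 <= rsum m (fun l => (c - r l) * Wt m E t l j)).
 { apply rsum_nonneg; intros. apply Rmult_le_pos; [specialize (H k H4); lra| apply Wt_nonneg; auto]. }
 lra. Qed.

Lemma itL_bounds t d r a c : (forall k, (k < m)%nat -> a <= r k <= c) -> forall j, (j < m)%nat -> a <= itL t d r j <= c.
Proof. intros H. induction d; simpl; auto. apply step_bounds; auto. Qed.

Lemma itL_colsum t d j : (j < m)%nat -> rsum m (fun k => itL t d (ev k) j) = 1.
Proof. intros Hj. assert (itL t d (fun _ => 1) j = 1).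
 { pose proof (itL_bounds t d (fun _ => 1) 1 1 ltac:(intros; lra) j Hj). lra. }
 rewrite itL_lin in H by auto. rewrite <- H. apply rsum_ext; intros; lra. Qed.

Lemma tight_exists (r : nat -> R) k : (1 <= k)%nat -> exists ka kb, (ka < k)%nat /\ (kb < k)%nat /\
  forall j, (j < k)%nat -> r ka <= r j <= r kb.
Proof. induction k; intros Hk; [lia|]. destruct (Nat.eq_dec k 0). subst. exists O, O. split; [lia|split; [lia|]].
 intros jj Hjj; replace jj with O by lia; lra.
 destruct IHk as [ka [kb [Ha [Hb H]]]]; [lia|].
 destruct (Rle_dec (r ka) (r k)); destruct (Rle_dec (r k) (r kb)).
 - exists ka, kb; split; [lia|split; [lia|]]. intros j Hj. destruct (Nat.eq_dec j k); [subst; lra| apply H; lia].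
 - exists ka, k; split; [lia|split; [lia|]]. intros j Hj. destruct (Nat.eq_dec j k); [subst; lra|]. specialize (H j ltac:(lia)); lra.
 - exists k, kb; split; [lia|split; [lia|]]. intros j Hj. destruct (Nat.eq_dec j k); [subst; lra|]. specialize (H j ltac:(lia)); lra.
 - exfalso. pose proof (H ka Ha). lra.
Qed.

Lemma contraction t L r a c ka kb eps :
  (forall k j, (k < m)%nat -> (j < m)%nat -> eps <= itL t L (ev k) j) ->
  (forall k, (k < m)%nat -> a <= r k <= c) -> (ka < m)%nat -> (kb < m)%nat -> r ka = a -> r kb = c ->
  forall j, (j < m)%nat -> a + eps * (c - a) <= itL t L r j <= c - eps * (c - a).
Proof. intros Hpos H Ha Hb Ea Ec j Hj. rewrite itL_lin by auto.
 pose proof (itL_colsum t L j Hj).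
 assert (HA : rsum m (fun k => r k * itL t L (ev k) j) - a = rsum m (fun k => (r k - a) * itL t L (ev k) j)).
 { rewrite (rsum_ext _ (fun k => (r k - a) * _) (fun k => r k * itL t L (ev k) j - a * itL t L (ev k) j)).
   rewrite rsum_minus, rsum_scal, H0. lra. intros; lra. }
 assert (HC : c - rsum m (fun k => r k * itL t L (ev k) j) = rsum m (fun k => (c - r k) * itL t L (ev k) j)).
 { rewrite (rsum_ext _ (fun k => (c - r k) * _) (fun k => c * itL t L (ev k) j - r k * itL t L (ev k) j)).
   rewrite rsum_minus, rsum_scal, H0. lra. intros; lra. }
 assert (Hn : forall k, (k < m)%nat -> 0 <= itL t L (ev k) j).
 { intros. apply itL_nonneg; auto. intros; unfold ev; destruct (Nat.eqb _ _); lra. }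
 assert ((c - a) * eps <= rsum m (fun k => (r k - a) * itL t L (ev k) j)).
 { eapply Rle_trans; [|apply (rsum_ge_term m (fun k => (r k - a) * itL t L (ev k) j) kb)]; auto.
   rewrite Ec. apply Rmult_le_compat_l. specialize (H ka Ha). lra. apply Hpos; auto.
   intros. apply Rmult_le_pos; auto. specialize (H j0 H1); lra. }
 assert ((c - a) * eps <= rsum m (fun k => (c - r k) * itL t L (ev k) j)).
 { eapply Rle_trans; [|apply (rsum_ge_term m (fun k => (c - r k) * itL t L (ev k) j) ka)]; auto.
   rewrite Ea. apply Rmult_le_compat_l. specialize (H ka Ha). lra. apply Hpos; auto.
   intros. apply Rmult_le_pos; auto. specialize (H j0 H2); lra. }
 lra. Qed.

End Net.

Lemma crossing (R0 : nat -> nat -> Prop) (P : nat -> bool) x y :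
  clos_refl_trans nat R0 x y -> P y = true -> P x = false -> exists a c, R0 a c /\ P a = false /\ P c = true.
Proof. induction 1; intros Hy Hx. exists x, y; auto. congruence.
 destruct (P y) eqn:Ey. apply IHclos_refl_trans1; auto. apply IHclos_refl_trans2; auto. Qed.

Section Pos.
Variable m Bc : nat.
Variable E : nat -> nat -> nat -> bool.
Hypothesis Hm : (1 <= m)%nat.
Hypothesis HA2 : assumption_A2 m Bc E.
Variable tau k : nat.
Hypothesis Hk : (k < m)%nat.

Let v l := itL m E tau l (ev k).
Definition inS l j : bool := if Rle_dec ((/ INR m) ^ l) (v l j) then true else false.

Lemma invm_pos : 0 < / INR m.
Proof. apply Rinv_0_lt_compat. replace 0 with (INR 0) by auto. apply lt_INR; lia. Qed.

Lemma v_nonneg l j : (j < m)%nat -> 0 <= v l j.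
Proof. intros. apply itL_nonneg; auto. intros; unfold ev; destruct (Nat.eqb _ _); lra. Qed.

Lemma inS_step l j j' : (j < m)%nat -> (j' < m)%nat -> (Nat.eqb j j' || E (tau - l)%nat j j')%bool = true ->
  inS l j' = true -> inS (S l) j = true.
Proof. intros Hj Hj' He H. unfold inS in *. destruct (Rle_dec _ (v l j')) as [r|]; [|discriminate].
 destruct (Rle_dec _ _) as [r'|n']; auto. exfalso. apply n'. unfold v; simpl. fold (v l). unfold step.
 eapply Rle_trans; [|apply (rsum_ge_term m (fun l0 => v l l0 * Wt m E (tau - l) l0 j) j')]; auto.
 simpl pow. rewrite (Rmult_comm (v l j')). apply Rmult_le_compat; auto. left; apply invm_pos. apply pow_le; left; apply invm_pos.
 apply Wt_pos_ge; auto. intros; apply Rmult_le_pos; [apply v_nonneg; auto| apply Wt_nonneg; auto]. Qed.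

Lemma inS_mono l j : (j < m)%nat -> inS l j = true -> inS (S l) j = true.
Proof. intros. apply (inS_step l j j); auto. rewrite Nat.eqb_refl; auto. Qed.

Lemma inS_mono_many l l' j : (j < m)%nat -> (l <= l')%nat -> inS l j = true -> inS l' j = true.
Proof. intros Hj Hl H. induction Hl; auto. apply inS_mono; auto. Qed.

Definition cnt l := countb m (inS l).

Lemma cnt_mono l l' : (l <= l')%nat -> (cnt l <= cnt l')%nat.
Proof. intros. apply countb_mono. intros; eapply inS_mono_many; eauto. Qed.

Lemma window k' l0 : (l0 + (k' + 1) * Bc = tau + 1)%nat -> (1 <= cnt l0)%nat -> (cnt l0 < m)%nat ->
  (cnt l0 < cnt (l0 + Bc))%nat.
Proof. intros Hl Hc1 Hcm. destruct (countb_lt_ex _ _ Hcm) as [j [Hj Pj]].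
 destruct (countb_ge1_ex _ _ Hc1) as [k0 [Hk0 Pk0]].
 destruct HA2 as [HB Hsc]. pose proof (Hsc k' j k0 Hj Hk0) as Hp.
 destruct (crossing _ (inS l0) _ _ Hp Pk0 Pj) as [a [c [[Ha [Hc [l' [Hl' El']]]] [Pa Pc]]]].
 apply (countb_strict m _ _ (fun kk Hkk H => inS_mono_many l0 (l0 + Bc) kk Hkk ltac:(lia) H) a Ha Pa).
 rewrite Nat.mul_add_distr_r in Hl, Hl'. rewrite Nat.mul_1_l in Hl, Hl'.
 set (l := (tau - l')%nat). assert (l0 <= l < l0 + Bc)%nat by (unfold l; lia).
 apply (inS_mono_many (S l)); [auto|lia|]. apply (inS_step l a c); auto.
 replace (tau - l)%nat with l' by (unfold l; lia). rewrite El'. apply Bool.orb_true_r.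
 apply (inS_mono_many l0); auto; lia. Qed.

Lemma positivity j : (m * Bc <= tau + 1)%nat -> (j < m)%nat -> (/ INR m) ^ (m * Bc) <= v (m * Bc) j.
Proof. intros HL Hj. assert (inS (m * Bc) j = true).
 2:{ unfold inS in H. destruct (Rle_dec _ _); auto; discriminate. }
 destruct HA2 as [HB Hsc].
 assert (H0 : inS 0 k = true). { unfold inS, v. simpl. unfold ev. rewrite Nat.eqb_refl. destruct (Rle_dec _ _); auto. lra. }
 destruct (Nat.eq_dec m 1). { assert (j = k) by lia. subst j. apply (inS_mono_many 0 (m*Bc) k); auto; lia. }
 set (q0 := ((tau + 1) / Bc)%nat). set (r0 := ((tau + 1) mod Bc)%nat).
 assert (Hd : (tau + 1 = Bc * q0 + r0)%nat) by (apply Nat.div_mod_eq).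
 assert (Hr : (r0 < Bc)%nat) by (apply Nat.mod_upper_bound; lia).
 assert (Hq : (m <= q0)%nat) by nia.
 assert (Hcl : forall jj, (jj <= m - 1)%nat -> (Nat.min (jj + 1) m <= cnt (r0 + jj * Bc))%nat).
 { induction jj; intros Hjj.
   - replace (r0 + 0 * Bc)%nat with r0 by lia. assert (1 <= cnt r0)%nat. { apply (countb_true _ _ k); auto. apply (inS_mono_many 0 r0 k); auto; lia. } lia.
   - specialize (IHjj ltac:(lia)). destruct (Nat.lt_ge_cases (cnt (r0 + jj * Bc)) m).
     + assert (cnt (r0 + jj * Bc) < cnt (r0 + jj * Bc + Bc))%nat.
       { apply (window (q0 - 1 - jj)); try lia. }
       replace (r0 + S jj * Bc)%nat with (r0 + jj * Bc + Bc)%nat by lia. lia.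
     + pose proof (cnt_mono (r0 + jj * Bc) (r0 + S jj * Bc) ltac:(nia)). lia. }
 specialize (Hcl (m - 1)%nat ltac:(lia)).
 assert (inS (r0 + (m - 1) * Bc) j = true). { apply countb_full with m; auto. unfold cnt in Hcl. lia. }
 apply (inS_mono_many (r0 + (m - 1) * Bc) (m * Bc) j); auto.
 assert (m * Bc = (m - 1) * Bc + Bc)%nat by nia. lia. Qed.

End Pos.

Lemma pow_decr x n n' : 0 <= x <= 1 -> (n <= n')%nat -> x ^ n' <= x ^ n.
Proof. intros Hx Hn. replace n' with (n + (n' - n))%nat by lia. rewrite pow_add.
 assert (x ^ (n' - n) <= 1). { replace 1 with (1 ^ (n' - n)) by apply pow1. apply pow_incr; lra. }
 assert (0 <= x ^ n) by (apply pow_le; lra). nra. Qed.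

Lemma eta_facts m Bc : (2 <= m)%nat -> (1 <= Bc)%nat ->
  let L := (m * Bc)%nat in let e := eta m Bc in
  0 < e < 1 /\ e ^ L = 1 - (/ INR m) ^ L /\ 0 < (/ INR m) ^ L <= / 2.
Proof. intros Hm HB L e.
 assert (HmR : 2 <= INR m) by (replace 2 with (INR 2) by (simpl; lra); apply le_INR; lia).
 assert (HL : (1 <= L)%nat) by (unfold L; nia).
 assert (HmL : INR m <= INR m ^ L).
 { replace (INR m) with (INR m ^ 1) at 1 by (simpl; lra). apply Rle_pow; lia || lra. }
 assert (Hp : 0 < INR m ^ L) by (apply pow_lt; lra).
 assert (He1 : 0 < (/ INR m) ^ L <= / 2).
 { rewrite pow_inv. split. apply Rinv_0_lt_compat; auto. apply Rinv_le_contravar; lra. }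
 assert (Hx : 0 < 1 - / INR m ^ L < 1). { rewrite <- pow_inv. lra. }
 assert (HLR : 0 < INR L) by (replace 0 with (INR 0) by auto; apply lt_INR; lia).
 unfold e, eta, rroot. fold L. destruct (Rlt_dec 0 _) as [_|]; [|lra].
 split; [split|split].
 - unfold Rpower. apply exp_pos.
 - replace 1 with (Rpower 1 (/ INR L)) at 2.
   apply Rlt_Rpower_l. apply Rinv_0_lt_compat; auto. lra.
   unfold Rpower. rewrite ln_1, Rmult_0_r, exp_0; auto.
 - rewrite <- Rpower_pow. rewrite Rpower_mult. rewrite Rinv_l by lra. rewrite Rpower_1 by lra. rewrite pow_inv; auto.
   unfold Rpower; apply exp_pos.
 - auto.
Qed.

Lemma eta_nonneg m Bc : 0 <= eta m Bc.
Proof. unfold eta, rroot. destruct (Rlt_dec _ _); [|lra]. unfold Rpower; left; apply exp_pos. Qed.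

Lemma ev_bounds i : forall k, (0 <= ev i k <= 1).
Proof. intros; unfold ev; destruct (Nat.eqb _ _); lra. Qed.

Section Spread.
Variable m Bc : nat.
Variable E : nat -> nat -> nat -> bool.
Hypothesis Hm : (1 <= m)%nat.
Hypothesis HA2 : assumption_A2 m Bc E.
Variable t i : nat.
Hypothesis Hi : (i < m)%nat.

Let R0 d := itL m E t d (ev i).

Lemma spread d : (d <= t)%nat -> exists a c, (forall j, (j < m)%nat -> a <= R0 (S d) j <= c) /\
   c - a <= 4 * (eta m Bc) ^ d.
Proof. intros Hd. pose proof (eta_nonneg m Bc) as He0.
 destruct (Nat.eq_dec m 1).
 { exists (R0 (S d) 0%nat), (R0 (S d) 0%nat). split. intros j Hj. replace j with 0%nat by lia. lra.
   assert (0 <= eta m Bc ^ d) by (apply pow_le; auto). lra. }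
 assert (HB : (1 <= Bc)%nat) by (destruct HA2; lia).
 destruct (eta_facts m Bc ltac:(lia) HB) as [[Ep Eq1] [EL [Ee1 Ee2]]].
 set (L := (m * Bc)%nat) in *. set (e := eta m Bc) in *. set (eps := (/ INR m) ^ L) in *.
 assert (HL1 : (1 <= L)%nat) by (unfold L; nia).
 assert (Hblk : forall nb, (nb * L <= t + 1)%nat -> exists a c, (forall j, (j < m)%nat -> a <= R0 (nb * L) j <= c) /\
    c - a <= e ^ (nb * L)).
 { induction nb; intros Hnb.
   - exists 0, 1. split. intros j Hj. apply ev_bounds. simpl; lra.
   - destruct IHnb as [a [c [Hac Hw]]]. nia.
     destruct (tight_exists m Hm (R0 (nb * L)) m Hm) as [ka [kb [Hka [Hkb Ht]]]].
     assert (Hw' : R0 (nb * L) kb - R0 (nb * L) ka <= c - a).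
     { pose proof (Hac ka Hka). pose proof (Hac kb Hkb). lra. }
     assert (Hcomp : R0 (S nb * L) = itL m E (t - nb * L) L (R0 (nb * L))).
     { unfold R0. rewrite <- itL_comp by auto. f_equal. lia. }
     set (a' := R0 (nb * L) ka). set (c' := R0 (nb * L) kb).
     exists (a' + eps * (c' - a')), (c' - eps * (c' - a')). split.
     + intros j Hj. rewrite Hcomp. apply contraction with ka kb; auto.
       intros k j0 Hk Hj0. apply (positivity m Bc E Hm HA2 (t - nb * L) k Hk j0); auto. nia.
     + replace (S nb * L)%nat with (nb * L + L)%nat by lia. rewrite pow_add, EL.
       assert (0 <= c' - a') by (pose proof (Ht kb Hkb); unfold a', c'; lra).
       assert (0 <= e ^ (nb * L)) by (apply pow_le; lra).
       assert ((1 - eps) * (c' - a') <= (1 - eps) * e ^ (nb * L)) by (apply Rmult_le_compat_l; [lra| unfold a', c'; lra]).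
       assert (0 <= eps * (c' - a')) by (apply Rmult_le_pos; lra).
       lra. }
 set (nb := ((S d) / L)%nat). set (r0 := ((S d) mod L)%nat).
 assert (Hdm : (S d = L * nb + r0)%nat) by (apply Nat.div_mod_eq).
 assert (Hr : (r0 < L)%nat) by (apply Nat.mod_upper_bound; lia).
 destruct (Hblk nb ltac:(nia)) as [a [c [Hac Hw]]].
 exists a, c. split.
 - intros j Hj. assert (R0 (S d) = itL m E (t - nb * L) (S d - nb * L) (R0 (nb * L))).
   { unfold R0. rewrite <- itL_comp by auto. f_equal. nia. }
   rewrite H. apply itL_bounds; auto.
 - assert (e ^ (nb * L) <= 4 * e ^ d).
   { destruct (Nat.eq_dec r0 0).
     - replace (nb * L)%nat with (S d) by nia. simpl. assert (0 <= e ^ d) by (apply pow_le; lra). nra.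
     - replace d with (nb * L + (r0 - 1))%nat by nia. rewrite pow_add.
       assert (e ^ L <= e ^ (r0 - 1)) by (apply pow_decr; lra || lia).
       assert (0 <= e ^ (nb * L)) by (apply pow_le; lra).
       assert (e ^ (nb * L) * e ^ L <= e ^ (nb * L) * e ^ (r0 - 1)) by (apply Rmult_le_compat_l; auto).
       rewrite EL in H1. nra. }
   lra.
Qed.

End Spread.

Lemma rsum_S n f : rsum (S n) f = rsum n f + f n.
Proof. reflexivity. Qed.

Section Ident.
Variable m : nat.
Variable E : nat -> nat -> nat -> bool.
Hypothesis Hm : (1 <= m)%nat.
Variable y w : nat -> nat -> R.
Hypothesis Hw : forall s j, (j < m)%nat -> w j (S s) = rsum m (fun l => Wt m E s j l * y l s).

Lemma ident t i : (i < m)%nat -> forall k, (k <= t)%nat ->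
  w i (S t) = rsum m (fun j => itL m E t (S k) (ev i) j * y j (t - k)%nat) +
     rsum k (fun r => rsum m (fun j => itL m E t (S r) (ev i) j * (y j (t - r)%nat - w j (t - r)%nat))).
Proof. intros Hi. induction k; intros Hk.
 - simpl rsum at 2. rewrite Rplus_0_r. rewrite Hw by auto. replace (t - 0)%nat with t by lia.
   apply rsum_ext. intros j Hj. simpl. unfold step. rewrite rsum_ev_l by auto. replace (t - 0)%nat with t by lia. auto.
 - rewrite IHk by lia. rewrite (rsum_S k).
   rewrite (rsum_ext m (fun j => itL m E t (S k) (ev i) j * y j (t - k)%nat)
     (fun j => itL m E t (S k) (ev i) j * w j (t - k)%nat + itL m E t (S k) (ev i) j * (y j (t - k)%nat - w j (t - k)%nat)))
     by (intros; ring).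
   rewrite rsum_plus.
   assert (rsum m (fun j => itL m E t (S k) (ev i) j * w j (t - k)%nat) =
           rsum m (fun j => itL m E t (S (S k)) (ev i) j * y j (t - S k)%nat)).
   { replace (t - k)%nat with (S (t - S k)) by lia.
     rewrite (rsum_ext m _ (fun j => rsum m (fun l => itL m E t (S k) (ev i) j * Wt m E (t - S k) j l * y l (t - S k)%nat))).
     rewrite rsum_swap. apply rsum_ext. intros l Hl. simpl itL at 2. unfold step at 1.
     rewrite <- rsum_scal_r. apply rsum_ext; intros; auto.
     intros j Hj. rewrite Hw by auto. rewrite <- rsum_scal. apply rsum_ext; intros; ring. }
   rewrite H. ring.
Qed.

Lemma sum_ident t : rsum m (fun j => y j t) = rsum m (fun j => y j 0%nat) +
   rsum t (fun r => rsum m (fun j => y j (t - r)%nat - w j (t - r)%nat)).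
Proof.
 assert (forall t, rsum m (fun j => y j t) = rsum m (fun j => y j 0%nat) +
   rsum t (fun r => rsum m (fun j => y j (S r) - w j (S r)))).
 { induction t0. simpl; ring. rewrite (rsum_S t0). rewrite <- Rplus_assoc, <- IHt0.
   rewrite rsum_minus.
   assert (rsum m (fun j => w j (S t0)) = rsum m (fun j => y j t0)).
   { rewrite (rsum_ext _ _ (fun j => rsum m (fun l => Wt m E t0 j l * y l t0))) by (intros; apply Hw; auto).
     rewrite rsum_swap. apply rsum_ext. intros l Hl. rewrite rsum_scal_r. rewrite Wt_colsum by auto. ring. }
   rewrite H. ring. }
 rewrite H. f_equal. rewrite (rsum_rev t). apply rsum_ext. intros r Hr. replace (t - r)%nat with (S (t - 1 - r)) by lia. auto.
Qed.

End Ident.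

Lemma avg_bounds m z a c : (1 <= m)%nat -> (forall j, (j < m)%nat -> a <= z j <= c) -> a <= rsum m z / INR m <= c.
Proof. intros Hm H. assert (0 < INR m) by (replace 0 with (INR 0) by auto; apply lt_INR; lia).
 assert (INR m * a <= rsum m z). { rewrite <- rsum_const. apply rsum_le. intros; apply H; auto. }
 assert (rsum m z <= INR m * c). { rewrite <- rsum_const. apply rsum_le. intros; apply H; auto. }
 split. apply Rmult_le_reg_r with (INR m); auto. unfold Rdiv. rewrite Rmult_assoc, Rinv_l by lra. lra.
 apply Rmult_le_reg_r with (INR m); auto. unfold Rdiv. rewrite Rmult_assoc, Rinv_l by lra. lra. Qed.

Section Consensus.
Variable m Bc : nat.
Variable E : nat -> nat -> nat -> bool.
Hypothesis Hm : (1 <= m)%nat.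
Hypothesis HA2 : assumption_A2 m Bc E.
Variable y w rho : nat -> nat -> R.
Hypothesis Hw : forall s j, (j < m)%nat -> w j (S s) = rsum m (fun l => Wt m E s j l * y l s).
Hypothesis Hrho : forall s j, (j < m)%nat -> rho j (S s) = rsum m (fun l => Wt m E s j l * rho l s).
Hypothesis Hrho0 : forall j, (j < m)%nat -> rho j 0%nat = 1.

Lemma rho_repr t i : (i < m)%nat -> rho i (S t) = rsum m (fun j => itL m E t (S t) (ev i) j).
Proof. intros Hi. rewrite (ident m E Hm rho rho Hrho t i Hi t) by lia.
 rewrite (rsum_ext t _ (fun _ => 0)). rewrite rsum_zero. rewrite Rplus_0_r. apply rsum_ext. intros.
 replace (t - t)%nat with 0%nat by lia. rewrite Hrho0; auto; ring.
 intros. rewrite (rsum_ext m _ (fun _ => 0)). apply rsum_zero. intros; ring. Qed.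

Lemma dev_bound t i d j : (i < m)%nat -> (d <= t)%nat -> (j < m)%nat ->
  Rabs (itL m E t (S d) (ev i) j - rho i (S t) / INR m) <= 4 * eta m Bc ^ d.
Proof. intros Hi Hd Hj. destruct (spread m Bc E Hm HA2 t i Hi d Hd) as [a [c [Hac Hw4]]].
 assert (a <= rho i (S t) / INR m <= c).
 { rewrite rho_repr by auto. apply avg_bounds; auto. intros j0 Hj0.
   replace (S t) with (S d + (t - d))%nat by lia. rewrite itL_comp by auto. apply itL_bounds; auto. }
 specialize (Hac j Hj). apply Rabs_le. lra. Qed.

Lemma consensus t i : (i < m)%nat -> 0 < rho i (S t) ->
  Rabs (w i (S t) / rho i (S t) - rsum m (fun j => y j t) / INR m) <=
  4 / rho i (S t) * (eta m Bc ^ t * rsum m (fun j => Rabs (y j 0%nat)) +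
     rsum t (fun r => eta m Bc ^ r * rsum m (fun j => Rabs (y j (t - r)%nat - w j (t - r)%nat)))).
Proof. intros Hi Hr. set (mu := rho i (S t) / INR m).
 assert (HmR : 0 < INR m) by (replace 0 with (INR 0) by auto; apply lt_INR; lia).
 assert (Hdiff : w i (S t) - mu * rsum m (fun j => y j t) =
   rsum m (fun j => (itL m E t (S t) (ev i) j - mu) * y j 0%nat) +
   rsum t (fun r => rsum m (fun j => (itL m E t (S r) (ev i) j - mu) * (y j (t - r)%nat - w j (t - r)%nat)))).
 { rewrite (ident m E Hm y w Hw t i Hi t) by lia. rewrite (sum_ident m E Hm y w Hw t).
   replace (t - t)%nat with 0%nat by lia.
   rewrite (rsum_ext m (fun j => (_ - mu) * y j 0%nat) (fun j => itL m E t (S t) (ev i) j * y j 0%nat - mu * y j 0%nat)) by (intros; ring).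
   rewrite rsum_minus, rsum_scal.
   rewrite (rsum_ext t (fun r => rsum m (fun j => (itL m E t (S r) (ev i) j - mu) * _))
     (fun r => rsum m (fun j => itL m E t (S r) (ev i) j * (y j (t - r)%nat - w j (t - r)%nat)) -
               mu * rsum m (fun j => y j (t - r)%nat - w j (t - r)%nat))).
   rewrite rsum_minus, rsum_scal. ring.
   intros r Hr0. rewrite <- rsum_scal, <- rsum_minus. apply rsum_ext; intros; ring. }
 assert (Hq : w i (S t) / rho i (S t) - rsum m (fun j => y j t) / INR m =
   (w i (S t) - mu * rsum m (fun j => y j t)) / rho i (S t)).
 { unfold mu. field. split; lra. }
 rewrite Hq, Hdiff. unfold Rdiv. rewrite Rabs_mult, Rabs_inv, (Rabs_right (rho i (S t))) by lra.
 match goal with |- _ <= 4 * ?a * ?b => replace (4*a*b) with (a * (4*b)) by ring end.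
 rewrite Rmult_comm. apply Rmult_le_compat_l.
 left; apply Rinv_0_lt_compat; auto.
 eapply Rle_trans; [apply Rabs_triang|]. rewrite Rmult_plus_distr_l. apply Rplus_le_compat.
 - eapply Rle_trans; [apply rsum_abs|]. rewrite <- Rmult_assoc, <- rsum_scal. apply rsum_le. intros j Hj.
   rewrite Rabs_mult. apply Rmult_le_compat_r; [apply Rabs_pos|]. apply dev_bound; auto.
 - eapply Rle_trans; [apply rsum_abs|]. rewrite <- rsum_scal. apply rsum_le. intros r Hr0.
   eapply Rle_trans; [apply rsum_abs|]. rewrite <- Rmult_assoc, <- rsum_scal. apply rsum_le. intros j Hj.
   rewrite Rabs_mult. apply Rmult_le_compat_r; [apply Rabs_pos|]. apply dev_bound; auto. lia.
Qed.

End Consensus.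

Lemma ln_le_mono x y : 0 < x -> x <= y -> ln x <= ln y.
Proof. intros. destruct (Req_dec x y). subst; lra. left; apply ln_increasing; lra. Qed.

Lemma INR_pos1 n : (1 <= n)%nat -> 0 < INR n.
Proof. intros. replace 0 with (INR 0) by auto. apply lt_INR; lia. Qed.

Lemma harmonic N : (1 <= N)%nat -> rsum N (fun s => / INR (S s)) <= 1 + ln (INR N).
Proof. induction N; intros H; [lia|]. destruct (Nat.eq_dec N 0). subst. simpl. rewrite ln_1. lra.
 change (rsum (S N) (fun s => / INR (S s))) with (rsum N (fun s => / INR (S s)) + / INR (S N)). specialize (IHN ltac:(lia)).
 assert (HN : 0 < INR N) by (apply INR_pos1; lia). rewrite S_INR.
 assert (INR N / (INR N + 1) <= exp (- / (INR N + 1))).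
 { eapply Rle_trans; [|apply exp_ineq1_le]. right; field; lra. }
 apply ln_le_mono in H0; [|apply Rdiv_lt_0_compat; lra]. rewrite ln_exp in H0.
 assert (ln (INR N) = ln (INR N / (INR N + 1)) + ln (INR N + 1)).
 { rewrite <- ln_mult by (try apply Rdiv_lt_0_compat; lra). f_equal. field. lra. }
 lra.
Qed.

Lemma CS2 n a c : (rsum n (fun k => a k * c k)) ^ 2 <= rsum n (fun k => a k ^ 2) * rsum n (fun k => c k ^ 2).
Proof. pose proof (cauchy_schwarz n a c). pose proof (cauchy_schwarz n (fun k => - a k) c). cbv beta in H0.
 rewrite (rsum_ext n (fun k => - a k * c k) (fun k => - (a k * c k))) in H0 by (intros; ring).
 rewrite (rsum_ext n (fun k => (- a k) ^ 2) (fun k => a k ^ 2)) in H0 by (intros; ring).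
 assert (rsum n (fun k => - (a k * c k)) = - rsum n (fun k => a k * c k)).
 { replace (- rsum n (fun k => a k * c k)) with (-1 * rsum n (fun k => a k * c k)) by ring.
   rewrite <- (rsum_scal n (-1)). apply rsum_ext; intros; ring. }
 rewrite H1 in H0.
 set (SA := rsum n (fun k => a k ^ 2)) in *. set (SC := rsum n (fun k => c k ^ 2)) in *.
 assert (0 <= SA) by (apply rsum_nonneg; intros; apply pow2_ge_0).
 assert (0 <= SC) by (apply rsum_nonneg; intros; apply pow2_ge_0).
 set (P := rsum n (fun k => a k * c k)) in *.
 assert (Rabs P <= sqrt SA * sqrt SC) by (apply Rabs_le; lra).
 assert (0 <= sqrt SA * sqrt SC) by (apply Rmult_le_pos; apply sqrt_pos).
 replace (SA * SC) with ((sqrt SA * sqrt SC) ^ 2).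
 rewrite <- (pow2_abs P). apply pow_incr. split; auto. apply Rabs_pos.
 simpl. rewrite Rmult_1_r. replace (sqrt SA * sqrt SC * (sqrt SA * sqrt SC)) with ((sqrt SA * sqrt SA) * (sqrt SC * sqrt SC)) by ring.
 rewrite !sqrt_sqrt; auto.
Qed.

Lemma sq_sum_le n a : (rsum n a) ^ 2 <= INR n * rsum n (fun k => a k ^ 2).
Proof. pose proof (CS2 n a (fun _ => 1)). cbv beta in H. rewrite (rsum_ext n (fun k => a k * 1) a) in H by (intros; ring).
 rewrite (rsum_ext n (fun k => 1 ^ 2) (fun _ => 1)) in H by (intros; ring). rewrite rsum_const in H. lra. Qed.

Lemma abs_sum_le n a : rsum n (fun k => Rabs (a k)) <= sqrt (INR n) * sqrt (rsum n (fun k => a k ^ 2)).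
Proof. pose proof (cauchy_schwarz n (fun k => Rabs (a k)) (fun _ => 1)). cbv beta in H.
 rewrite (rsum_ext n (fun k => Rabs (a k) * 1) (fun k => Rabs (a k))) in H by (intros; ring).
 rewrite (rsum_ext n (fun k => Rabs (a k) ^ 2) (fun k => a k ^ 2)) in H by (intros; apply pow2_abs).
 rewrite (rsum_ext n (fun k => 1 ^ 2) (fun _ => 1)) in H by (intros; ring). rewrite rsum_const in H.
 rewrite Rmult_1_r in H. rewrite Rmult_comm. exact H. Qed.

Lemma geom_sum e N : 0 <= e < 1 -> rsum N (fun s => e ^ (S s)) <= e / (1 - e).
Proof. intros He. assert (forall N, (1 - e) * rsum N (fun s => e ^ (S s)) = e - e ^ (S N)).
 { induction N0. simpl; ring. change (rsum (S N0) (fun s => e ^ (S s))) with (rsum N0 (fun s => e ^ (S s)) + e ^ (S N0)).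
   rewrite Rmult_plus_distr_l, IHN0. simpl. ring. }
 specialize (H N). assert (0 <= e ^ (S N)) by (apply pow_le; lra).
 apply Rmult_le_reg_l with (1 - e). lra. unfold Rdiv. replace ((1 - e) * (e * / (1 - e))) with e by (field; lra). lra. Qed.

Definition hfun (e : R) (s : nat) : R := rsum s (fun r => e ^ r / INR (s - r)).

Lemma h_rec e s : hfun e (S s) = / INR (S s) + e * hfun e s.
Proof. unfold hfun. rewrite rsum_shift. f_equal. simpl; unfold Rdiv; rewrite Rmult_1_l. f_equal.
 rewrite <- rsum_scal. apply rsum_ext; intros. simpl. replace (S s - S k)%nat with (s - k)%nat by lia. field.
 apply not_0_INR. lia. Qed.

Lemma h_nonneg e s : 0 <= e -> 0 <= hfun e s.
Proof. intros. unfold hfun. apply rsum_nonneg; intros. apply Rmult_le_pos. apply pow_le; auto.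
 left; apply Rinv_0_lt_compat, INR_pos1; lia. Qed.

Lemma h_sum e N : 0 <= e < 1 -> (1 - e) * rsum N (fun s => hfun e (S s)) <= rsum N (fun s => / INR (S s)).
Proof. intros He. assert (forall N, (1 - e) * rsum N (fun s => hfun e (S s)) + e * hfun e N <= rsum N (fun s => / INR (S s))).
 { induction N0. simpl. unfold hfun; simpl; lra.
   change (rsum (S N0) (fun s => hfun e (S s))) with (rsum N0 (fun s => hfun e (S s)) + hfun e (S N0)).
   change (rsum (S N0) (fun s => / INR (S s))) with (rsum N0 (fun s => / INR (S s)) + / INR (S N0)).
   rewrite h_rec in *. lra. }
 specialize (H N). assert (0 <= e * hfun e N) by (apply Rmult_le_pos; [lra| apply h_nonneg; lra]). lra. Qed.

Lemma weight_shift N X : (forall s, 0 <= X s) -> rsum (S N) (fun s => INR s * X s) <= INR N * rsum N (fun s => X (S s)).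
Proof. intros H. rewrite rsum_shift. simpl INR at 1. rewrite Rmult_0_l, Rplus_0_l. rewrite <- rsum_scal.
 apply rsum_le. intros. apply Rmult_le_compat_r; auto. apply le_INR; lia. Qed.

Lemma frac_sum N : (1 <= N)%nat -> rsum N (fun s => INR s / INR (S s)) <= INR N - 1.
Proof. induction N; intros H; [lia|]. destruct (Nat.eq_dec N 0). subst; simpl; lra.
 change (rsum (S N) (fun s => INR s / INR (S s))) with (rsum N (fun s => INR s / INR (S s)) + INR N / INR (S N)).
 specialize (IHN ltac:(lia)). rewrite S_INR. assert (0 < INR N) by (apply INR_pos1; lia).
 assert (INR N / (INR N + 1) <= 1). { apply Rmult_le_reg_r with (INR N + 1). lra. unfold Rdiv. rewrite Rmult_assoc, Rinv_l by lra. lra. }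
 lra. Qed.

Lemma sum_INR N : rsum N (fun s => INR s) = INR N * (INR N - 1) / 2.
Proof. induction N. simpl; lra. change (rsum (S N) (fun s => INR s)) with (rsum N (fun s => INR s) + INR N).
 rewrite IHN, S_INR. field. Qed.

Lemma tele N a : rsum N (fun s => INR s * INR (S s) * (a s - a (S s)) - 2 * INR s * a s) = - (INR N * (INR N - 1) * a N).
Proof. induction N. simpl; ring.
 change (rsum (S N) ?F) with (rsum N F + F N). rewrite IHN. rewrite !S_INR. ring. Qed.

Lemma convex_of_sc nn f0 tau0 : 0 < tau0 -> strongly_convex nn f0 tau0 ->
  forall x y a, supported nn x -> supported nn y -> 0 <= a <= 1 -> f0 (vcomb a x y) <= a * f0 x + (1 - a) * f0 y.
Proof. intros Ht H x y a Hx Hy Ha. specialize (H x y a Hx Hy Ha).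
 assert (0 <= tau0 / 2 * a * (1 - a) * (norm2 nn (vsub x y)) ^ 2).
 { apply Rmult_le_pos; [|apply pow2_ge_0]. apply Rmult_le_pos; [|lra]. apply Rmult_le_pos; lra. }
 lra. Qed.

Lemma jensen nn f0 tau0 (y : nat -> vec) N : 0 < tau0 -> strongly_convex nn f0 tau0 ->
  (forall s, supported nn (y s)) -> (2 <= N)%nat ->
  f0 (fun k => rsum N (fun s => INR s * y s k) / (INR N * (INR N - 1) / 2)) <=
  rsum N (fun s => INR s * f0 (y s)) / (INR N * (INR N - 1) / 2).
Proof. intros Ht Hsc Hy HN. replace N with (N - 2 + 2)%nat by lia. generalize (N - 2)%nat. clear N HN. intros N.
 induction N.
 - simpl. replace (fun k => (0 + 0 * y 0%nat k + 1 * y 1%nat k) / ((1 + 1) * (1 + 1 - 1) / 2)) with (y 1%nat).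
   right; field. apply functional_extensionality; intros; field.
 - set (M := (N + 2)%nat) in *. replace (S N + 2)%nat with (S M) by (unfold M; lia).
   assert (HM : 2 <= INR M) by (replace 2 with (INR 2) by (simpl; lra); apply le_INR; unfold M; lia).
   set (P := fun k => rsum M (fun s => INR s * y s k) / (INR M * (INR M - 1) / 2)) in *.
   set (a := (INR M - 1) / (INR M + 1)).
   assert (Ha : 0 <= a <= 1). { unfold a. split. apply Rmult_le_pos; [lra| left; apply Rinv_0_lt_compat; lra].
     apply Rmult_le_reg_r with (INR M + 1); [lra|]. unfold Rdiv. rewrite Rmult_assoc, Rinv_l by lra. lra. }
   assert (HP : supported nn P). { intros k Hk. unfold P. rewrite (rsum_ext M _ (fun _ => 0)). rewrite rsum_zero. unfold Rdiv; ring.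
     intros s Hs. rewrite (Hy s k Hk). ring. }
   replace (fun k => rsum (S M) (fun s => INR s * y s k) / (INR (S M) * (INR (S M) - 1) / 2)) with (vcomb a P (y M)).
   2:{ apply functional_extensionality; intros k. unfold vcomb, P, a.
       change (rsum (S M) (fun s => INR s * y s k)) with (rsum M (fun s => INR s * y s k) + INR M * y M k).
       rewrite S_INR. field. lra. }
   eapply Rle_trans. apply (convex_of_sc nn f0 tau0 Ht Hsc); auto.
   change (rsum (S M) (fun s => INR s * f0 (y s))) with (rsum M (fun s => INR s * f0 (y s)) + INR M * f0 (y M)).
   eapply Rle_trans. apply Rplus_le_compat_r. apply Rmult_le_compat_l. lra. apply IHN.
   right. unfold a. rewrite S_INR. field. lra.
Qed.

Section Main.
Variables (m p Bc : nat) (n : nat -> nat)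
  (f : nat -> vec -> R) (X : nat -> vec -> Prop)
  (A : nat -> nat -> nat -> R) (b : nat -> vec)
  (gam tau G : nat -> R) (E : nat -> nat -> nat -> bool)
  (q D delta : R)
  (theta u lam : nat -> nat -> vec) (rho : nat -> nat -> R)
  (x : nat -> nat -> vec) (xs : nat -> vec).
Hypothesis Hm1 : (1 <= m)%nat.
Hypothesis Hgam : forall i, (i < m)%nat -> 0 < gam i.
Hypothesis HA1 : forall i, (i < m)%nat ->
     0 < tau i /\ strongly_convex (n i) (f i) (tau i) /\
     subset_Rn (n i) (X i) /\ nonempty (X i) /\ convex_set (X i) /\
     compact_set (n i) (X i).
Hypothesis HG : forall i, (i < m)%nat -> 0 < G i /\
     forall z, X i z -> norm2 p (vsub (matvec (n i) (A i) z) (b i)) <= G i.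
Hypothesis HA2 : assumption_A2 m Bc E.
Hypothesis Hdel : is_delta m E delta.
Hypothesis Hq : 0 < q.
Hypothesis Hqg : q * rsum m gam / INR m >= 4.
Hypothesis Hrun : DRDGA_run m p n f X A b gam E (fun t => q / INR t) theta u lam rho x.
Hypothesis HD : forall i t, (i < m)%nat -> (1 <= t)%nat -> norm2 p (lam i t) <= D.
Hypothesis Hopt : is_optimal m p n f X A b xs.

Lemma rho0 i : (i < m)%nat -> rho i 0%nat = 1.
Proof. intros Hi. destruct (Hrun i Hi) as [H _]; exact H. Qed.
Lemma u_rec s i : (i < m)%nat -> forall k, u i (S s) k = rsum m (fun j => Wt m E s i j * theta j s k).
Proof. intros Hi. destruct (Hrun i Hi) as [_ H]; destruct (H s) as [H1 [H2 [H3 [[H4 H5] H6]]]]; exact H1. Qed.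
Lemma rho_rec s i : (i < m)%nat -> rho i (S s) = rsum m (fun j => Wt m E s i j * rho j s).
Proof. intros Hi. destruct (Hrun i Hi) as [_ H]; destruct (H s) as [H1 [H2 [H3 [[H4 H5] H6]]]]; exact H2. Qed.
Lemma lam_eq s i : (i < m)%nat -> forall k, lam i (S s) k = u i (S s) k / rho i (S s).
Proof. intros Hi. destruct (Hrun i Hi) as [_ H]; destruct (H s) as [H1 [H2 [H3 [[H4 H5] H6]]]]; exact H3. Qed.
Lemma x_in s i : (i < m)%nat -> X i (x i (S s)).
Proof. intros Hi. destruct (Hrun i Hi) as [_ H]; destruct (H s) as [H1 [H2 [H3 [[H4 H5] H6]]]]; exact H4. Qed.
Lemma x_min s i : (i < m)%nat -> forall z, X i z ->
  lagr p (n i) (f i) (A i) (b i) (gam i) (x i (S s)) (lam i (S s)) <= lagr p (n i) (f i) (A i) (b i) (gam i) z (lam i (S s)).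
Proof. intros Hi. destruct (Hrun i Hi) as [_ H]; destruct (H s) as [H1 [H2 [H3 [[H4 H5] H6]]]]; exact H5. Qed.
Lemma th_rec s i : (i < m)%nat -> forall k, theta i (S s) k = u i (S s) k + q / INR (S s) *
  (matvec (n i) (A i) (x i (S s)) k - b i k - gam i * lam i (S s) k).
Proof. intros Hi. destruct (Hrun i Hi) as [_ H]; destruct (H s) as [H1 [H2 [H3 [[H4 H5] H6]]]]; exact H6. Qed.

Let eps0 := (/ INR m) ^ (m * Bc).

Lemma mR : 0 < INR m.
Proof. apply INR_pos1; auto. Qed.

Lemma rho_pow s i : (i < m)%nat -> (/ INR m) ^ s <= rho i s.
Proof. revert i. induction s; intros i Hi. rewrite rho0 by auto. simpl; lra.
 rewrite rho_rec by auto. pose proof mR as HmR.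
 eapply Rle_trans; [|apply (rsum_ge_term m (fun j => Wt m E s i j * rho j s) i)]; auto.
 simpl pow. apply Rmult_le_compat. left; apply Rinv_0_lt_compat; auto. apply pow_le; left; apply Rinv_0_lt_compat; auto.
 apply Wt_pos_ge; auto. rewrite Nat.eqb_refl; auto. auto.
 intros j Hj. apply Rmult_le_pos. apply Wt_nonneg; auto. eapply Rle_trans; [|apply IHs; auto]. apply pow_le; left; apply Rinv_0_lt_compat; auto.
Qed.

Lemma rho_nonneg s i : (i < m)%nat -> 0 <= rho i s.
Proof. intros. eapply Rle_trans; [|apply rho_pow; auto]. apply pow_le; left; apply Rinv_0_lt_compat, mR. Qed.

Lemma rho_sum s : rsum m (fun j => rho j s) = INR m.
Proof. rewrite (sum_ident m E Hm1 rho rho rho_rec s). rewrite (rsum_ext m _ (fun _ => 1)) by (intros; apply rho0; auto).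
 rewrite (rsum_ext s _ (fun _ => 0)). rewrite rsum_zero, rsum_const. ring.
 intros. rewrite (rsum_ext m _ (fun _ => 0)). apply rsum_zero. intros; ring. Qed.

Lemma rho_lower s i : (i < m)%nat -> eps0 <= rho i (S s).
Proof. intros Hi. pose proof mR as HmR. assert (0 < / INR m) by (apply Rinv_0_lt_compat; auto).
 assert (/ INR m <= 1). { replace 1 with (/ 1) by lra. apply Rinv_le_contravar; [lra|]. replace 1 with (INR 1) by auto. apply le_INR; auto. }
 destruct (Nat.le_gt_cases (m * Bc) (s + 1)) as [HL|HL].
 - assert (HB : (1 <= Bc)%nat) by (destruct HA2; lia). set (L := (m * Bc)%nat) in *.
   rewrite (ident m E Hm1 rho rho rho_rec s i Hi (L - 1)) by nia.
   rewrite (rsum_ext (L - 1) _ (fun _ => 0)). rewrite rsum_zero, Rplus_0_r.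
   2:{ intros. rewrite (rsum_ext m _ (fun _ => 0)). apply rsum_zero. intros; ring. }
   replace (S (L - 1)) with L by nia.
   apply Rle_trans with (rsum m (fun j => eps0 * rho j (s - (L - 1))%nat)).
   rewrite rsum_scal, rho_sum. unfold eps0. rewrite <- (Rmult_1_r ((/ INR m) ^ L)) at 1. apply Rmult_le_compat_l.
   apply pow_le; lra. replace 1 with (INR 1) by auto. apply le_INR; auto.
   apply rsum_le. intros j Hj. apply Rmult_le_compat_r. apply rho_nonneg; auto.
   apply (positivity m Bc E Hm1 HA2 s i Hi j); auto.
 - eapply Rle_trans; [|apply rho_pow; auto]. unfold eps0. apply pow_decr; [lra| lia].
Qed.

Lemma rho_Wprod s i : (i < m)%nat -> rho i (S s) = Wprod m E s i.
Proof. revert i. induction s; intros i Hi.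
 - rewrite rho_rec by auto. simpl. apply rsum_ext. intros; rewrite rho0 by auto; ring.
 - rewrite rho_rec by auto. simpl. apply rsum_ext. intros; rewrite IHs by auto; auto. Qed.

Lemma delta_pos : 0 < delta.
Proof. destruct Hdel as [_ H2]. eapply Rlt_le_trans; [|apply H2].
 - unfold eps0. apply pow_lt. apply Rinv_0_lt_compat, mR.
 - intros v [t [i [Hi ->]]]. rewrite <- rho_Wprod by auto. apply rho_lower; auto. Qed.

Lemma delta_le s i : (i < m)%nat -> delta <= rho i (S s).
Proof. intros Hi. destruct Hdel as [H1 _]. apply H1. exists s, i. split; auto. apply rho_Wprod; auto. Qed.

Lemma rho_posS s i : (i < m)%nat -> 0 < rho i (S s).
Proof. intros. eapply Rlt_le_trans; [apply delta_pos| apply delta_le; auto]. Qed.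

Definition gg i s k := matvec (n i) (A i) (x i s) k - b i k.
Definition gs i k := matvec (n i) (A i) (xs i) k - b i k.
Definition ee i s k := gg i s k - gam i * lam i s k.
Definition cc i := G i + gam i * D.
Definition yb s k := rsum m (fun j => theta j s k) / INR m.
Definition asq s := rsum p (fun k => yb s k ^ 2).

Lemma D_nonneg : 0 <= D.
Proof. eapply Rle_trans; [|apply (HD 0%nat 1%nat); lia]. unfold norm2. apply sqrt_pos. Qed.

Lemma usum s k : rsum m (fun j => u j (S s) k) = rsum m (fun j => theta j s k).
Proof. rewrite (rsum_ext m _ (fun j => rsum m (fun l => Wt m E s j l * theta l s k))) by (intros; apply u_rec; auto).
 rewrite rsum_swap. apply rsum_ext. intros l Hl. rewrite rsum_scal_r, Wt_colsum by auto. ring. Qed.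

Lemma yb_rec s k : yb (S s) k = yb s k + q / INR (S s) / INR m * rsum m (fun j => ee j (S s) k).
Proof. unfold yb. rewrite (rsum_ext m _ (fun j => u j (S s) k + q / INR (S s) * ee j (S s) k)).
 rewrite rsum_plus, usum, rsum_scal. pose proof mR. assert (INR (S s) <> 0) by (apply not_0_INR; lia).
 field. split; lra.
 intros j Hj. rewrite th_rec by auto. unfold ee, gg. ring. Qed.

Lemma comp_le_norm2 pp v k : (k < pp)%nat -> Rabs (v k) <= norm2 pp v.
Proof. intros Hk. unfold norm2. rewrite <- sqrt_Rsqr_abs. apply sqrt_le_1_alt.
 unfold Rsqr. replace (v k * v k) with (v k ^ 2) by ring. apply (rsum_ge_term pp (fun k => v k ^ 2)); auto.
 intros; apply pow2_ge_0. Qed.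

Lemma lam_comp s i k : (i < m)%nat -> (k < p)%nat -> Rabs (lam i (S s) k) <= D.
Proof. intros. eapply Rle_trans; [apply comp_le_norm2; eauto|]. apply HD; auto; lia. Qed.

Lemma yb_bound s k : (k < p)%nat -> Rabs (yb s k) <= D.
Proof. intros Hk. pose proof mR. unfold yb. rewrite <- usum.
 rewrite (rsum_ext m _ (fun j => rho j (S s) * lam j (S s) k)).
 2:{ intros j Hj. rewrite lam_eq by auto. pose proof (rho_posS s j Hj). field. lra. }
 unfold Rdiv. rewrite Rabs_mult, Rabs_inv, (Rabs_right (INR m)) by lra.
 apply Rmult_le_reg_r with (INR m); auto. rewrite Rmult_assoc, Rinv_l, Rmult_1_r by lra.
 eapply Rle_trans; [apply rsum_abs|]. rewrite <- (rho_sum (S s)), Rmult_comm, <- rsum_scal_r.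
 apply rsum_le. intros j Hj. rewrite Rabs_mult, Rabs_right. apply Rmult_le_compat_l.
 apply rho_nonneg; auto. apply lam_comp; auto. apply Rle_ge, rho_nonneg; auto. Qed.

Lemma norm2_sq pp v : rsum pp (fun k => v k ^ 2) = norm2 pp v ^ 2.
Proof. unfold norm2. simpl. rewrite Rmult_1_r, sqrt_sqrt; auto. apply rsum_nonneg; intros; apply pow2_ge_0. Qed.

Lemma gg_bound j s : (j < m)%nat -> norm2 p (gg j (S s)) <= G j.
Proof. intros Hj. destruct (HG j Hj) as [_ H]. apply H. apply x_in; auto. Qed.

Lemma ee_sq j s : (j < m)%nat -> rsum p (fun k => ee j (S s) k ^ 2) <= cc j ^ 2.
Proof. intros Hj. unfold ee, cc.
 rewrite (rsum_ext p _ (fun k => gg j (S s) k ^ 2 - 2 * gam j * (gg j (S s) k * lam j (S s) k) + gam j ^ 2 * lam j (S s) k ^ 2)) by (intros; ring).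
 rewrite rsum_plus, rsum_minus, !rsum_scal, !norm2_sq.
 pose proof (CS2 p (gg j (S s)) (lam j (S s))) as H. rewrite !norm2_sq in H.
 set (P := rsum p (fun k => gg j (S s) k * lam j (S s) k)) in *.
 set (ng := norm2 p (gg j (S s))) in *. set (nl := norm2 p (lam j (S s))) in *.
 assert (Hng : 0 <= ng) by apply sqrt_pos. assert (Hnl : 0 <= nl) by apply sqrt_pos.
 assert (HgG : ng <= G j) by (apply gg_bound; auto). assert (HlD : nl <= D) by (apply HD; auto; lia).
 pose proof (Hgam j Hj).
 assert (0 <= ng * nl) by (apply Rmult_le_pos; auto).
 assert (- P <= ng * nl) by nra.
 assert (ng * nl <= G j * D) by (apply Rmult_le_compat; auto).
 assert (ng ^ 2 <= G j ^ 2) by (apply pow_incr; lra).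
 assert (nl ^ 2 <= D ^ 2) by (apply pow_incr; lra).
 assert (gam j ^ 2 * nl ^ 2 <= gam j ^ 2 * D ^ 2) by (apply Rmult_le_compat_l; [apply pow2_ge_0| auto]).
 assert (2 * gam j * (- P) <= 2 * gam j * (G j * D)) by (apply Rmult_le_compat_l; lra).
 nra. Qed.

Lemma cc_nonneg j : (j < m)%nat -> 0 <= cc j.
Proof. intros Hj. unfold cc. destruct (HG j Hj). pose proof (Hgam j Hj). pose proof D_nonneg. nra. Qed.

Definition Bv := rmax_upto (pred m) (fun i => sqrt (INR p) * cc i).

Lemma ee_l1 j s : (j < m)%nat -> rsum p (fun k => Rabs (ee j (S s) k)) <= Bv.
Proof. intros Hj. eapply Rle_trans; [apply abs_sum_le|]. eapply Rle_trans; [|apply (rmax_upto_ge _ (fun i => sqrt (INR p) * cc i) j); lia].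
 apply Rmult_le_compat_l; [apply sqrt_pos|]. rewrite <- (sqrt_pow2 (cc j)) by (apply cc_nonneg; auto).
 apply sqrt_le_1_alt. apply ee_sq; auto. Qed.


Definition Th0 := rsum m (fun i => norm1 p (theta i 0%nat)).

Lemma coord_cons s i k : (i < m)%nat ->
  Rabs (lam i (S s) k - yb s k) <= 4 / delta * (eta m Bc ^ s * rsum m (fun j => Rabs (theta j 0%nat k)) +
     rsum s (fun r => eta m Bc ^ r * rsum m (fun j => Rabs (q / INR (s - r) * ee j (s - r)%nat k)))).
Proof. intros Hi.
 pose proof (consensus m Bc E Hm1 HA2 (fun j t => theta j t k) (fun j t => u j t k) rho
   (fun s0 j Hj => u_rec s0 j Hj k) rho_rec rho0 s i Hi (rho_posS s i Hi)) as H.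
 cbv beta in H. rewrite <- lam_eq in H by auto. fold (yb s k) in H.
 eapply Rle_trans; [apply H|]. clear H.
 assert (HB : 0 <= eta m Bc ^ s * rsum m (fun j => Rabs (theta j 0%nat k)) +
     rsum s (fun r => eta m Bc ^ r * rsum m (fun j => Rabs (theta j (s - r)%nat k - u j (s - r)%nat k)))).
 { apply Rplus_le_le_0_compat. apply Rmult_le_pos. apply pow_le, eta_nonneg. apply rsum_nonneg; intros; apply Rabs_pos.
   apply rsum_nonneg; intros. apply Rmult_le_pos. apply pow_le, eta_nonneg. apply rsum_nonneg; intros; apply Rabs_pos. }
 replace (rsum s (fun r => eta m Bc ^ r * rsum m (fun j => Rabs (q / INR (s - r) * ee j (s - r)%nat k)))) with
   (rsum s (fun r => eta m Bc ^ r * rsum m (fun j => Rabs (theta j (s - r)%nat k - u j (s - r)%nat k)))).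
 2:{ apply rsum_ext. intros r Hr. f_equal. apply rsum_ext. intros j Hj. f_equal.
     replace (s - r)%nat with (S (s - r - 1)) by lia. rewrite th_rec by auto. unfold ee, gg. ring. }
 apply Rmult_le_compat_r; auto. unfold Rdiv. apply Rmult_le_compat_l; [lra|].
 apply Rinv_le_contravar. apply delta_pos. apply delta_le; auto. Qed.

Lemma devl1_bound s i : (i < m)%nat ->
  rsum p (fun k => Rabs (lam i (S s) k - yb s k)) <= 4 / delta * (eta m Bc ^ s * Th0 + q * INR m * Bv * hfun (eta m Bc) s).
Proof. intros Hi. eapply Rle_trans; [apply rsum_le; intros k Hk; apply coord_cons; auto|].
 rewrite rsum_scal. pose proof delta_pos. apply Rmult_le_compat_l. unfold Rdiv; apply Rmult_le_pos; [lra| left; apply Rinv_0_lt_compat; auto].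
 rewrite rsum_plus. apply Rplus_le_compat.
 - rewrite rsum_scal. right. f_equal. unfold Th0, norm1. apply rsum_swap.
 - rewrite rsum_swap. unfold hfun. rewrite <- rsum_scal. apply rsum_le. intros r Hr.
   rewrite rsum_scal. rewrite (rsum_swap p m).
   replace (q * INR m * Bv * (eta m Bc ^ r / INR (s - r))) with (eta m Bc ^ r * (q / INR (s - r) * (INR m * Bv))) by (field; apply not_0_INR; lia).
   apply Rmult_le_compat_l. apply pow_le, eta_nonneg.
   rewrite <- rsum_const, <- rsum_scal. apply rsum_le. intros j Hj.
   rewrite (rsum_ext p _ (fun k => q / INR (s - r) * Rabs (ee j (s - r)%nat k))).
   rewrite rsum_scal. apply Rmult_le_compat_l. apply Rmult_le_pos; [lra| left; apply Rinv_0_lt_compat, INR_pos1; lia].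
   replace (s - r)%nat with (S (s - r - 1)) by lia. apply ee_l1; auto.
   intros k Hk. rewrite Rabs_mult, (Rabs_right (q / _)); auto. apply Rle_ge, Rmult_le_pos; [lra| left; apply Rinv_0_lt_compat, INR_pos1; lia].
Qed.

Definition Phi s := Fobj m f (fun i => x i (S s)) - Fobj m f xs.

Lemma xs_in i : (i < m)%nat -> X i (xs i).
Proof. intros Hi. destruct Hopt as [[H1 _] _]. auto. Qed.
Lemma gs_sum k : (k < p)%nat -> rsum m (fun i => gs i k) = 0.
Proof. intros Hk. destruct Hopt as [[_ H2] _]. apply H2; auto. Qed.

Lemma gs_comp i k : (i < m)%nat -> (k < p)%nat -> Rabs (gs i k) <= G i.
Proof. intros Hi Hk. destruct (HG i Hi) as [_ H]. eapply Rle_trans; [|apply (H (xs i) (xs_in i Hi))].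
 apply (comp_le_norm2 p (vsub (matvec (n i) (A i) (xs i)) (b i)) k Hk). Qed.
Lemma gg_comp i s k : (i < m)%nat -> (k < p)%nat -> Rabs (gg i (S s) k) <= G i.
Proof. intros Hi Hk. eapply Rle_trans; [|apply (gg_bound i s Hi)].
 apply (comp_le_norm2 p (gg i (S s)) k Hk). Qed.

Lemma phi_lin s : Phi s <= rsum m (fun i => rsum p (fun k => lam i (S s) k * (gs i k - gg i (S s) k))).
Proof. unfold Phi, Fobj. rewrite <- rsum_minus. apply rsum_le. intros i Hi.
 pose proof (x_min s i Hi (xs i) (xs_in i Hi)). unfold lagr in H.
 rewrite (rsum_ext p _ (fun k => lam i (S s) k * gs i k - lam i (S s) k * gg i (S s) k)) by (intros; ring).
 rewrite rsum_minus. unfold gs, gg. lra. Qed.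

Lemma step_bound s : Phi s <= rsum m (fun i => 2 * cc i * rsum p (fun k => Rabs (lam i (S s) k - yb s k)))
   + INR m * INR (S s) / (2 * q) * (asq s - asq (S s)) + q / (2 * INR (S s)) * rsum m (fun i => cc i ^ 2)
   - rsum m gam * asq s.
Proof. eapply Rle_trans; [apply phi_lin|].
 set (la i k := lam i (S s) k). set (y k := yb s k). set (g i k := gg i (S s) k). set (e i k := ee i (S s) k).
 assert (Hge : forall i k, g i k = e i k + gam i * la i k) by (intros; unfold g, e, ee, la; ring).
 rewrite (rsum_ext m _ (fun i => rsum p (fun k => ((lam i (S s) k - yb s k) * (gs i k - gg i (S s) k) + gam i * yb s k * (yb s k - lam i (S s) k))
    + y k * gs i k - y k * e i k - gam i * y k ^ 2))).
 2:{ intros i Hi. apply rsum_ext. intros k Hk. unfold la, y, g, e, ee. ring. }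
 rewrite (rsum_ext m _ (fun i => rsum p (fun k => (lam i (S s) k - yb s k) * (gs i k - gg i (S s) k) + gam i * yb s k * (yb s k - lam i (S s) k))
    + rsum p (fun k => y k * gs i k) - rsum p (fun k => y k * e i k) - gam i * asq s)).
 2:{ intros i Hi. unfold asq. rewrite <- rsum_scal. rewrite <- rsum_plus, <- !rsum_minus. apply rsum_ext; intros; unfold y; ring. }
 rewrite !rsum_minus, !rsum_plus. rewrite rsum_scal_r.
 assert (H0 : rsum m (fun i => rsum p (fun k => y k * gs i k)) = 0).
 { rewrite rsum_swap. rewrite (rsum_ext p _ (fun _ => 0)). apply rsum_zero. intros k Hk.
   rewrite rsum_scal, gs_sum; auto; ring. }
 rewrite H0, Rplus_0_r.
 assert (H1 : rsum m (fun i => rsum p (fun k => (lam i (S s) k - yb s k) * (gs i k - gg i (S s) k) + gam i * yb s k * (yb s k - lam i (S s) k))) <=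
    rsum m (fun i => 2 * cc i * rsum p (fun k => Rabs (lam i (S s) k - yb s k)))).
 { apply rsum_le. intros i Hi. rewrite <- rsum_scal. apply rsum_le. intros k Hk.
   destruct (Nat.lt_ge_cases k p) as [Hkp|Hkp]; [|lia].
   pose proof (gs_comp i k Hi Hkp). pose proof (gg_comp i s k Hi Hkp).
   pose proof (yb_bound s k Hkp). pose proof (Hgam i Hi). pose proof D_nonneg.
   unfold la, y, g in *; cbv beta in *.
   assert (Rabs (gs i k - gg i (S s) k) <= 2 * G i).
   { eapply Rle_trans; [apply Rabs_triang|]. rewrite Rabs_Ropp. lra. }
   assert (Rabs (gam i * yb s k * (yb s k - lam i (S s) k)) <= gam i * D * Rabs (lam i (S s) k - yb s k)).
   { rewrite !Rabs_mult. rewrite (Rabs_right (gam i)) by lra.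
     replace (Rabs (yb s k - lam i (S s) k)) with (Rabs (lam i (S s) k - yb s k)) by (rewrite <- Rabs_Ropp; f_equal; ring).
     apply Rmult_le_compat_r; [apply Rabs_pos|]. apply Rmult_le_compat_l; lra. }
   assert (Rabs ((lam i (S s) k - yb s k) * (gs i k - gg i (S s) k)) <= Rabs (lam i (S s) k - yb s k) * (2 * G i)).
   { rewrite Rabs_mult. apply Rmult_le_compat_l; [apply Rabs_pos| auto]. }
   pose proof (Rabs_pos (lam i (S s) k - yb s k)).
   assert (gam i * D * Rabs (lam i (S s) k - yb s k) <= 2 * (gam i * D) * Rabs (lam i (S s) k - yb s k)).
   { apply Rmult_le_compat_r; auto. assert (0 <= gam i * D) by (apply Rmult_le_pos; lra). lra. }
   unfold cc. pose proof (Rle_abs ((lam i (S s) k - yb s k) * (gs i k - gg i (S s) k) + gam i * yb s k * (yb s k - lam i (S s) k))).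
   pose proof (Rabs_triang ((lam i (S s) k - yb s k) * (gs i k - gg i (S s) k)) (gam i * yb s k * (yb s k - lam i (S s) k))).
   unfold la, y in *. nra. }
 assert (HmR := mR). assert (HsR : 0 < INR (S s)) by (apply INR_pos1; lia).
 assert (H2 : - rsum m (fun i => rsum p (fun k => y k * e i k)) = INR m * INR (S s) / (2*q) * (asq s - asq (S s)) +
     q / (2 * INR m * INR (S s)) * rsum p (fun k => (rsum m (fun i => e i k)) ^ 2)).
 { rewrite rsum_swap.
   rewrite (rsum_ext p (fun k => rsum m (fun i => y k * e i k)) (fun k => y k * rsum m (fun i => e i k))) by (intros; rewrite rsum_scal; auto).
   unfold asq. rewrite <- rsum_minus, <- !rsum_scal, <- rsum_plus.
   replace (- rsum p (fun k => y k * rsum m (fun i => e i k))) with (rsum p (fun k => - (y k * rsum m (fun i => e i k)))).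
   2:{ replace (- rsum p (fun k => y k * rsum m (fun i => e i k))) with (-1 * rsum p (fun k => y k * rsum m (fun i => e i k))) by ring.
       rewrite <- rsum_scal. apply rsum_ext; intros; ring. }
   apply rsum_ext. intros k Hk. rewrite yb_rec. unfold y, e. field. split; lra. }
 assert (H3 : rsum p (fun k => (rsum m (fun i => e i k)) ^ 2) <= INR m * rsum m (fun i => cc i ^ 2)).
 { eapply Rle_trans. apply rsum_le. intros k Hk. apply sq_sum_le.
   rewrite rsum_scal. apply Rmult_le_compat_l; [lra|]. rewrite rsum_swap. apply rsum_le. intros i Hi. apply ee_sq; auto. }
 assert (H4 : q / (2 * INR m * INR (S s)) * rsum p (fun k => (rsum m (fun i => e i k)) ^ 2) <= q / (2 * INR (S s)) * rsum m (fun i => cc i ^ 2)).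
 { replace (q / (2 * INR (S s)) * rsum m (fun i => cc i ^ 2)) with (q / (2 * INR m * INR (S s)) * (INR m * rsum m (fun i => cc i ^ 2))) by (field; split; lra).
   apply Rmult_le_compat_l; auto. apply Rmult_le_pos; [lra| left; apply Rinv_0_lt_compat]. apply Rmult_lt_0_compat; [lra| auto]. }
 unfold y in *. lra.
Qed.


Lemma eta_lt1 : 0 <= eta m Bc < 1.
Proof. split. apply eta_nonneg. destruct (Nat.eq_dec m 1).
 - rewrite e. unfold eta, rroot. simpl. destruct (Rlt_dec _ _) as [r|]; [|lra]. exfalso. rewrite pow1 in r. lra.
 - assert (HB : (1 <= Bc)%nat) by (destruct HA2; lia). destruct (eta_facts m Bc ltac:(lia) HB) as [[_ H] _]. auto. Qed.

Lemma Bv_nonneg : 0 <= Bv.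
Proof. eapply Rle_trans; [|apply (rmax_upto_ge _ (fun i => sqrt (INR p) * cc i) 0); lia].
 apply Rmult_le_pos; [apply sqrt_pos| apply cc_nonneg; lia]. Qed.

Lemma asq_nonneg s : 0 <= asq s.
Proof. apply rsum_nonneg; intros; apply pow2_ge_0. Qed.

Lemma weighted_step s : INR s * Phi s <=
   INR s * (2 * rsum m cc * (4 / delta * (eta m Bc ^ s * Th0 + q * INR m * Bv * hfun (eta m Bc) s)))
   + q / 2 * rsum m (fun i => cc i ^ 2) * (INR s / INR (S s))
   + INR m / (2 * q) * (INR s * INR (S s) * (asq s - asq (S s)) - 2 * INR s * asq s).
Proof. pose proof (step_bound s) as H. pose proof (pos_INR s) as Hs.
 assert (HK : rsum m (fun i => 2 * cc i * rsum p (fun k => Rabs (lam i (S s) k - yb s k))) <=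
   2 * rsum m cc * (4 / delta * (eta m Bc ^ s * Th0 + q * INR m * Bv * hfun (eta m Bc) s))).
 { set (K := 4 / delta * (eta m Bc ^ s * Th0 + q * INR m * Bv * hfun (eta m Bc) s)).
   apply Rle_trans with (rsum m (fun i => 2 * cc i * K)).
   - apply rsum_le; intros i Hi. apply Rmult_le_compat_l. pose proof (cc_nonneg i Hi); lra. apply devl1_bound; auto.
   - right. rewrite rsum_scal_r, rsum_scal. ring. }
 assert (Hg : INR m / q <= rsum m gam).
 { pose proof mR. apply Rmult_le_reg_r with q; auto. unfold Rdiv. rewrite Rmult_assoc, Rinv_l, Rmult_1_r by lra.
   apply Rge_le in Hqg. unfold Rdiv in Hqg. apply Rmult_le_compat_r with (r := INR m) in Hqg; [|lra].
   rewrite Rmult_assoc, Rinv_l, Rmult_1_r in Hqg by lra. lra. }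
 pose proof (asq_nonneg s).
 assert (INR s * (INR m / q) * asq s <= INR s * rsum m gam * asq s).
 { apply Rmult_le_compat_r; auto. apply Rmult_le_compat_l; auto. }
 assert (INR s * Phi s <= INR s * (rsum m (fun i => 2 * cc i * rsum p (fun k => Rabs (lam i (S s) k - yb s k)))
   + INR m * INR (S s) / (2 * q) * (asq s - asq (S s)) + q / (2 * INR (S s)) * rsum m (fun i => cc i ^ 2)
   - rsum m gam * asq s)) by (apply Rmult_le_compat_l; auto).
 assert (INR s * rsum m (fun i => 2 * cc i * rsum p (fun k => Rabs (lam i (S s) k - yb s k))) <=
   INR s * (2 * rsum m cc * (4 / delta * (eta m Bc ^ s * Th0 + q * INR m * Bv * hfun (eta m Bc) s)))) by (apply Rmult_le_compat_l; auto).
 assert (HsR : 0 < INR (S s)) by (apply INR_pos1; lia).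
 assert (E1 : INR s * (q / (2 * INR (S s)) * rsum m (fun i => cc i ^ 2)) = q / 2 * rsum m (fun i => cc i ^ 2) * (INR s / INR (S s))) by (field; lra).
 assert (E2 : INR s * (INR m * INR (S s) / (2 * q) * (asq s - asq (S s))) - INR s * (INR m / q) * asq s =
    INR m / (2 * q) * (INR s * INR (S s) * (asq s - asq (S s)) - 2 * INR s * asq s)) by (field; lra).
 nra.
Qed.

Lemma final_bound T : (2 <= T)%nat ->
  Fobj m f (xhat x T) - Fobj m f xs <=
    32 / (INR T * delta) * rsum m (fun i => G i + gam i * D) *
      (eta m Bc / (1 - eta m Bc) * rsum m (fun i => norm1 p (theta i O))
       + q * INR m * rmax_upto (Nat.pred m) (fun i => sqrt (INR p) * (G i + gam i * D)) / (1 - eta m Bc) * (1 + ln (INR T)))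
    + q / INR T * rsum m (fun i => (G i + gam i * D) ^ 2).
Proof. intros HT. fold (cc 0%nat). 
 change (fun i => G i + gam i * D) with cc. change (fun i => (G i + gam i * D) ^ 2) with (fun i => cc i ^ 2).
 change (fun i => sqrt (INR p) * (G i + gam i * D)) with (fun i => sqrt (INR p) * cc i).
 fold Bv. fold Th0.
 set (e := eta m Bc). pose proof eta_lt1 as He. fold e in He.
 set (Z := INR T * (INR T - 1) / 2).
 assert (HTR : 2 <= INR T) by (replace 2 with (INR 2) by (simpl; lra); apply le_INR; auto).
 assert (HZ : 0 < Z) by (unfold Z; nra).
 assert (HJ : Fobj m f (xhat x T) <= rsum T (fun s => INR s * Fobj m f (fun i => x i (S s))) / Z).
 { unfold Fobj. unfold Rdiv. rewrite (rsum_ext T _ (fun s => rsum m (fun i => INR s * f i (x i (S s))))) by (intros; rewrite rsum_scal; auto).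
   rewrite rsum_swap, <- rsum_scal_r. apply rsum_le. intros i Hi.
   destruct (HA1 i Hi) as [Ht [Hsc [Hsub _]]].
   pose proof (jensen (n i) (f i) (tau i) (fun s => x i (S s)) T Ht Hsc (fun s => Hsub _ (x_in s i Hi)) HT).
   unfold xhat. fold Z. unfold Z. unfold Rdiv in H. exact H. }
 assert (HZs : rsum T (fun s => INR s) = Z) by apply sum_INR.
 assert (HP : Fobj m f (xhat x T) - Fobj m f xs <= rsum T (fun s => INR s * Phi s) / Z).
 { replace (rsum T (fun s => INR s * Phi s) / Z) with (rsum T (fun s => INR s * Fobj m f (fun i => x i (S s))) / Z - Fobj m f xs).
   lra. rewrite (rsum_ext T (fun s => INR s * Phi s) (fun s => INR s * Fobj m f (fun i => x i (S s)) - INR s * Fobj m f xs)) by (intros; unfold Phi; ring).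
   rewrite rsum_minus, rsum_scal_r. replace (rsum T INR) with Z by (symmetry; exact HZs). field. lra. }
 set (C := rsum m cc). set (S2 := rsum m (fun i => cc i ^ 2)).
 assert (HC : 0 <= C) by (apply rsum_nonneg; intros; apply cc_nonneg; auto).
 assert (HS2 : 0 <= S2) by (apply rsum_nonneg; intros; apply pow2_ge_0).
 pose proof delta_pos as Hd.
 assert (HW : rsum T (fun s => INR s * Phi s) <=
   rsum T (fun s => INR s * (2 * C * (4 / delta * (e ^ s * Th0 + q * INR m * Bv * hfun e s))))
   + q / 2 * S2 * rsum T (fun s => INR s / INR (S s))
   + INR m / (2 * q) * rsum T (fun s => INR s * INR (S s) * (asq s - asq (S s)) - 2 * INR s * asq s)).
 { rewrite <- !rsum_scal, <- !rsum_plus. apply rsum_le. intros s0 _. apply weighted_step. }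
 rewrite tele in HW.
 assert (HTel : INR m / (2 * q) * - (INR T * (INR T - 1) * asq T) <= 0).
 { pose proof (asq_nonneg T). pose proof mR. assert (0 <= INR T * (INR T - 1) * asq T) by (apply Rmult_le_pos; [nra| auto]).
   assert (0 <= INR m / (2 * q)) by (unfold Rdiv; apply Rmult_le_pos; [lra| left; apply Rinv_0_lt_compat; lra]). nra. }
 assert (HF : rsum T (fun s => INR s / INR (S s)) <= INR T - 1) by (apply frac_sum; lia).
 destruct T as [|T0]; [lia|]. set (N := T0) in *.
 assert (HN1 : (1 <= N)%nat) by lia.
 assert (Hsh : rsum (S N) (fun s => INR s * (2 * C * (4 / delta * (e ^ s * Th0 + q * INR m * Bv * hfun e s)))) <=
    2 * C * (4 / delta) * (INR N * (Th0 * (e / (1 - e)) + q * INR m * Bv * ((1 + ln (INR (S N))) / (1 - e))))).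
 { assert (Hq0 : 0 <= q * INR m * Bv) by (apply Rmult_le_pos; [apply Rmult_le_pos; [lra| pose proof mR; lra]| apply Bv_nonneg]).
   assert (HX : forall s0, 0 <= e ^ s0 * Th0 + q * INR m * Bv * hfun e s0).
   { intros. apply Rplus_le_le_0_compat. apply Rmult_le_pos. apply pow_le; lra.
     unfold Th0, norm1. apply rsum_nonneg; intros; apply rsum_nonneg; intros; apply Rabs_pos.
     apply Rmult_le_pos; auto. apply h_nonneg; lra. }
   rewrite (rsum_ext (S N) _ (fun s => 2 * C * (4 / delta) * (INR s * (e ^ s * Th0 + q * INR m * Bv * hfun e s)))) by (intros; ring).
   rewrite rsum_scal. apply Rmult_le_compat_l. apply Rmult_le_pos; [lra| unfold Rdiv; apply Rmult_le_pos; [lra| left; apply Rinv_0_lt_compat; lra]].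
   eapply Rle_trans. apply weight_shift. auto. apply Rmult_le_compat_l. apply pos_INR.
   rewrite rsum_plus. rewrite rsum_scal_r, rsum_scal. apply Rplus_le_compat.
   - rewrite Rmult_comm. apply Rmult_le_compat_l. unfold Th0, norm1. apply rsum_nonneg; intros; apply rsum_nonneg; intros; apply Rabs_pos.
     apply geom_sum; lra.
   - apply Rmult_le_compat_l; auto. pose proof (h_sum e N He). pose proof (harmonic N HN1).
     assert (ln (INR N) <= ln (INR (S N))) by (apply ln_le_mono; [apply INR_pos1; lia| apply le_INR; lia]).
     apply Rmult_le_reg_l with (1 - e). lra. unfold Rdiv. replace ((1 - e) * ((1 + ln (INR (S N))) * / (1 - e))) with (1 + ln (INR (S N))) by (field; lra).
     lra. }
 set (K := Th0 * (e / (1 - e)) + q * INR m * Bv * ((1 + ln (INR (S N))) / (1 - e))) in *.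
 assert (HK0 : 0 <= K).
 { unfold K. apply Rplus_le_le_0_compat. apply Rmult_le_pos. unfold Th0, norm1. apply rsum_nonneg; intros; apply rsum_nonneg; intros; apply Rabs_pos.
   unfold Rdiv; apply Rmult_le_pos; [lra| left; apply Rinv_0_lt_compat; lra].
   apply Rmult_le_pos. apply Rmult_le_pos; [apply Rmult_le_pos; [lra| pose proof mR; lra]| apply Bv_nonneg].
   unfold Rdiv; apply Rmult_le_pos; [|left; apply Rinv_0_lt_compat; lra].
   assert (0 <= ln (INR (S N))). { rewrite <- ln_1. apply ln_le_mono; [lra| replace 1 with (INR 1) by auto; apply le_INR; lia]. } lra. }
 rewrite S_INR in HF. replace (INR N + 1 - 1) with (INR N) in HF by ring.
 assert (HF2 : q / 2 * S2 * rsum (S N) (fun s => INR s / INR (S s)) <= q / 2 * S2 * INR N).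
 { apply Rmult_le_compat_l; auto. apply Rmult_le_pos; auto; lra. }
 assert (Hsum : rsum (S N) (fun s => INR s * Phi s) <= INR N * (8 * C / delta * K + q / 2 * S2)).
 { assert (2 * C * (4 / delta) * (INR N * K) = INR N * (8 * C / delta * K)) by (field; lra). lra. }
 assert (HNR : 0 < INR N) by (apply INR_pos1; lia).
 assert (HZ' : Z = INR N * (INR N + 1) / 2) by (unfold Z, N; rewrite S_INR; field).
 eapply Rle_trans; [apply HP|]. unfold Rdiv at 1. eapply Rle_trans.
 apply Rmult_le_compat_r; [left; apply Rinv_0_lt_compat; auto| apply Hsum].
 rewrite HZ'. rewrite S_INR.
 replace (e / (1 - e) * Th0 + q * INR m * Bv / (1 - e) * (1 + ln (INR N + 1))) with K by (unfold K; rewrite S_INR; field; lra).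
 assert (0 <= C * K) by (apply Rmult_le_pos; auto).
 assert (E3 : INR N * (8 * C / delta * K + q / 2 * S2) * / (INR N * (INR N + 1) / 2) =
   16 / ((INR N + 1) * delta) * (C * K) + q / (INR N + 1) * S2) by (field; lra).
 rewrite E3.
 assert (16 / ((INR N + 1) * delta) * (C * K) <= 32 / ((INR N + 1) * delta) * (C * K)).
 { apply Rmult_le_compat_r; auto. unfold Rdiv. apply Rmult_le_compat_r; [left; apply Rinv_0_lt_compat; apply Rmult_lt_0_compat; lra| lra]. }
 replace (32 / ((INR N + 1) * delta) * C * K) with (32 / ((INR N + 1) * delta) * (C * K)) by ring.
 lra.
Qed.


End Main.

Theorem theorem2
  (m p Bc : nat) (n : nat -> nat)
  (f : nat -> vec -> R) (X : nat -> vec -> Prop)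
  (A : nat -> nat -> nat -> R) (b : nat -> vec)
  (gam tau G : nat -> R) (E : nat -> nat -> nat -> bool)
  (q D delta : R)
  (theta u lam : nat -> nat -> vec) (rho : nat -> nat -> R)
  (x : nat -> nat -> vec) (xs : nat -> vec) (T : nat) :
  (1 <= m)%nat ->
  (* regularization parameters *)
  (forall i, (i < m)%nat -> 0 < gam i) ->
  (* Assumption A1 *)
  (forall i, (i < m)%nat ->
     0 < tau i /\ strongly_convex (n i) (f i) (tau i) /\
     subset_Rn (n i) (X i) /\ nonempty (X i) /\ convex_set (X i) /\
     compact_set (n i) (X i)) ->
  (forall i, (i < m)%nat -> 0 < G i /\
     forall z, X i z -> norm2 p (vsub (matvec (n i) (A i) z) (b i)) <= G i) ->
  (* Assumption A2 *)
  assumption_A2 m Bc E ->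
  is_delta m E delta ->
  (* stepsize beta[t] = q / t, with q gamma / m >= 4 *)
  0 < q ->
  q * rsum m gam / INR m >= 4 ->
  DRDGA_run m p n f X A b gam E (fun t => q / INR t) theta u lam rho x ->
  (* D bounds the dual iterates *)
  (forall i t, (i < m)%nat -> (1 <= t)%nat -> norm2 p (lam i t) <= D) ->
  is_optimal m p n f X A b xs ->
  (2 <= T)%nat ->
  let B := rmax_upto (Nat.pred m) (fun i => sqrt (INR p) * (G i + gam i * D)) in
  let et := eta m Bc in
  Fobj m f (xhat x T) - Fobj m f xs <=
    32 / (INR T * delta) * rsum m (fun i => G i + gam i * D) *
      (et / (1 - et) * rsum m (fun i => norm1 p (theta i O))
       + q * INR m * B / (1 - et) * (1 + ln (INR T)))
    + q / INR T * rsum m (fun i => (G i + gam i * D) ^ 2).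
Proof.
  intros Hm1 Hgam HA1 HG HA2 Hdel Hq Hqg Hrun HD Hopt HT B et.
  exact (final_bound m p Bc n f X A b gam tau G E q D delta theta u lam rho x xs
           Hm1 Hgam HA1 HG HA2 Hdel Hq Hqg Hrun HD Hopt T HT).
Qed.
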